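(* Let $\mathbb{H}$ be a real Hilbert space, $T\in\mathbb{B}(\mathbb{H})$ with $T\neq 0$, and fix $\epsilon\in[0,1)$. (i) The following are equivalent: (1) for every $A\in\mathbb{B}(\mathbb{H})$: $T\perp_B^{\epsilon}A$ if and only if there exists $x\in M_T$ with $|\langle Tx,Ax\rangle|\le\epsilon\|T\|\|A\|$; (2) $M_T=S_{H_0}$ for some finite dimensional subspace $H_0$ of $\mathbb{H}$, and the restriction of $T$ to $H_0^{\perp}$ satisfies $\|T|_{H_0^\perp}\|<\|T\|$. (ii) If (2) holds, then for every $A\in\mathbb{B}(\mathbb{H})$ with $M_T\subseteq M_A$: $T\perp_B^{\epsilon}A$ if and only if there exists $x\in M_T$ with $Tx\perp^{\epsilon}Ax$.
   Context: $\mathbb{B}(\mathbb{H})$ is the space of bounded linear operators on $\mathbb{H}$ with the operator norm. $S_{H_0}$ is the unit sphere of $H_0$; $M_T=\{x\in S_{\mathbb{H}}:\|Tx\|=\|T\|\}$. For $\epsilon\in[0,1)$ and $u,v$ in a normed space, $u\perp_B^{\epsilon}v$ means $\|u+\lambda v\|^2\ge\|u\|^2-2\epsilon\|u\|\|\lambda v\|$ for all $\lambda\in\mathbb{R}$ (applied here to operators with the operator norm). In an inner product space, $x\perp^{\epsilon}y$ means $|\langle x,y\rangle|\le\epsilon\|x\|\|y\|$. *)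

(* Defs.v *)
From Stdlib Require Import Reals Lra ClassicalEpsilon.
Open Scope R_scope.
Set Implicit Arguments.

Record HilbertSpace : Type := {
  hcar :> Type;
  hzero : hcar;
  hadd : hcar -> hcar -> hcar;
  hopp : hcar -> hcar;
  hscal : R -> hcar -> hcar;
  hinner : hcar -> hcar -> R;
  hadd_assoc : forall x y z, hadd x (hadd y z) = hadd (hadd x y) z;
  hadd_comm : forall x y, hadd x y = hadd y x;
  hadd_0 : forall x, hadd hzero x = x;
  hadd_opp : forall x, hadd x (hopp x) = hzero;
  hscal_1 : forall x, hscal 1 x = x;
  hscal_assoc : forall a b x, hscal a (hscal b x) = hscal (a * b) x;
  hscal_addr : forall a x y, hscal a (hadd x y) = hadd (hscal a x) (hscal a y);
  hscal_addl : forall a b x, hscal (a + b) x = hadd (hscal a x) (hscal b x);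
  hinner_sym : forall x y, hinner x y = hinner y x;
  hinner_addl : forall x y z, hinner (hadd x y) z = hinner x z + hinner y z;
  hinner_scall : forall a x y, hinner (hscal a x) y = a * hinner x y;
  hinner_pos : forall x, 0 <= hinner x x;
  hinner_def : forall x, hinner x x = 0 -> x = hzero;
  hcomplete : forall u : nat -> hcar,
    (forall eps, 0 < eps -> exists N, forall n m, (N <= n)%nat -> (N <= m)%nat ->
        sqrt (hinner (hadd (u n) (hopp (u m))) (hadd (u n) (hopp (u m)))) < eps) ->
    exists l, forall eps, 0 < eps -> exists N, forall n, (N <= n)%nat ->
        sqrt (hinner (hadd (u n) (hopp l)) (hadd (u n) (hopp l))) < eps
}.

Section Defs.
Variable H : HilbertSpace.

Definition hnorm (x : H) : R := sqrt (hinner H x x).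

Definition linear_op (T : H -> H) : Prop :=
  (forall x y, T (hadd H x y) = hadd H (T x) (T y)) /\
  (forall a x, T (hscal H a x) = hscal H a (T x)).

Definition bounded_linear (T : H -> H) : Prop :=
  linear_op T /\ exists C, forall x, hnorm (T x) <= C * hnorm x.

Definition opnorm_on (Q : H -> Prop) (T : H -> H) : R :=
  epsilon (inhabits 0)
    (is_lub (fun r => exists x, Q x /\ hnorm x <= 1 /\ r = hnorm (T x))).

Definition opnorm (T : H -> H) : R := opnorm_on (fun _ => True) T.

Definition normset (T : H -> H) (x : H) : Prop :=
  hnorm x = 1 /\ hnorm (T x) = opnorm T.

Definition BJ_orth_eps (eps : R) (T A : H -> H) : Prop :=
  forall lam : R,
    (opnorm (fun x => hadd H (T x) (hscal H lam (A x)))) ^ 2 >=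
    (opnorm T) ^ 2 - 2 * eps * opnorm T * opnorm (fun x => hscal H lam (A x)).

Definition ip_orth_eps (eps : R) (x y : H) : Prop :=
  Rabs (hinner H x y) <= eps * hnorm x * hnorm y.

Definition is_subspace (P : H -> Prop) : Prop :=
  P (hzero H) /\ (forall x y, P x -> P y -> P (hadd H x y)) /\
  (forall a x, P x -> P (hscal H a x)).

Fixpoint lin_comb (n : nat) (v : nat -> H) (c : nat -> R) : H :=
  match n with
  | O => hzero H
  | S k => hadd H (lin_comb k v c) (hscal H (c k) (v k))
  end.

Definition finite_dim_subspace (P : H -> Prop) : Prop :=
  is_subspace P /\
  exists (n : nat) (v : nat -> H),
    (forall i, (i < n)%nat -> P (v i)) /\
    (forall x, P x -> exists c, x = lin_comb n v c).

Definition orth_compl (P : H -> Prop) (y : H) : Prop :=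
  forall x, P x -> hinner H x y = 0.

Definition unit_sphere (P : H -> Prop) (x : H) : Prop :=
  P x /\ hnorm x = 1.

End Defs.

Arguments hnorm {H} x.
Arguments linear_op {H} T.
Arguments bounded_linear {H} T.
Arguments opnorm_on {H} Q T.
Arguments opnorm {H} T.
Arguments normset {H} T x.
Arguments BJ_orth_eps {H} eps T A.
Arguments ip_orth_eps {H} eps x y.
Arguments is_subspace {H} P.
Arguments lin_comb {H} n v c.
Arguments finite_dim_subspace {H} P.
Arguments orth_compl {H} P y.
Arguments unit_sphere {H} P x.

(* Main.v *)
Require Import Defs.
From Stdlib Require Import Reals Lra Psatz ClassicalEpsilon Classical FunctionalExtensionality.
Open Scope R_scope.

Section Basics.
Variable H : HilbertSpace.
Local Notation "x '+v' y" := (hadd H x y) (at level 50, left associativity).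
Local Notation "a '*v' x" := (hscal H a x) (at level 40, no associativity).
Local Notation "'0v'" := (hzero H).
Local Notation ip := (hinner H).
Implicit Types (e : nat -> H) (c d : nat -> R) (n m : nat).

Lemma hadd_0r (x : H) : x +v 0v = x.
Proof. rewrite hadd_comm; apply hadd_0. Qed.

Lemma hadd_cancel (x y z : H) : x +v y = x +v z -> y = z.
Proof.
  intro E. rewrite <- (hadd_0 H y), <- (hadd_0 H z).
  rewrite <- (hadd_opp H x), (hadd_comm H x (hopp H x)).
  rewrite <- !hadd_assoc, E. reflexivity.
Qed.

Lemma hscal_0l (x : H) : 0 *v x = 0v.
Proof.
  apply (hadd_cancel (0 *v x)). rewrite <- hscal_addl, hadd_0r.
  replace (0+0) with 0 by ring. reflexivity.
Qed.

Lemma hscal_0r (a : R) : a *v 0v = 0v.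
Proof.
  rewrite <- (hscal_0l 0v) at 1. rewrite hscal_assoc. replace (a*0) with 0 by ring. apply hscal_0l.
Qed.

Lemma hopp_scal (x : H) : hopp H x = (-1) *v x.
Proof.
  apply (hadd_cancel x). rewrite hadd_opp.
  rewrite <- (hscal_1 H x) at 1. rewrite <- hscal_addl.
  replace (1 + -1) with 0 by ring. symmetry; apply hscal_0l.
Qed.

Lemma ip_0l (y : H) : ip 0v y = 0.
Proof. rewrite <- (hscal_0l 0v), hinner_scall. ring. Qed.

Lemma ip_0r (y : H) : ip y 0v = 0.
Proof. rewrite hinner_sym. apply ip_0l. Qed.

Lemma ip_addr (x y z : H) : ip x (y +v z) = ip x y + ip x z.
Proof. rewrite hinner_sym, hinner_addl, (hinner_sym _ y), (hinner_sym _ z). reflexivity. Qed.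

Lemma ip_scalr (a : R) (x y : H) : ip x (a *v y) = a * ip x y.
Proof. rewrite hinner_sym, hinner_scall, hinner_sym. reflexivity. Qed.

Lemma hscal_add_same (a b : R) (x : H) : a *v x +v b *v x = (a+b) *v x.
Proof. rewrite hscal_addl. reflexivity. Qed.

Lemma sub_self (x : H) : x +v (-1) *v x = 0v.
Proof. rewrite <- hopp_scal. apply hadd_opp. Qed.

Lemma hnorm_sq (x : H) : hnorm x * hnorm x = ip x x.
Proof. unfold hnorm. apply sqrt_sqrt, hinner_pos. Qed.

Lemma hnorm_pos (x : H) : 0 <= hnorm x.
Proof. unfold hnorm. apply sqrt_pos. Qed.

Lemma hnorm_0 : hnorm 0v = 0.
Proof. unfold hnorm. rewrite ip_0l. apply sqrt_0. Qed.

Lemma hnorm_eq0 (x : H) : hnorm x = 0 -> x = 0v.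
Proof. intro E. apply hinner_def. rewrite <- hnorm_sq, E. ring. Qed.

Lemma hnorm_scal (a : R) (x : H) : hnorm (a *v x) = Rabs a * hnorm x.
Proof.
  unfold hnorm. rewrite hinner_scall, ip_scalr.
  replace (a * (a * ip x x)) with (Rsqr a * ip x x) by (unfold Rsqr; ring).
  rewrite sqrt_mult_alt by apply Rle_0_sqr. rewrite sqrt_Rsqr_abs. reflexivity.
Qed.

Lemma sqrt_le_of_sq (a b : R) : 0 <= b -> a <= b * b -> sqrt a <= b.
Proof.
  intros Hb Hab. destruct (Rle_or_lt a 0) as [Ha|Ha].
  - rewrite (sqrt_neg_0 a Ha). exact Hb.
  - rewrite <- (sqrt_square b Hb). apply sqrt_le_1_alt. lra.
Qed.

Lemma norm_le_iff (x : H) (b : R) : 0 <= b -> ip x x <= b * b -> hnorm x <= b.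
Proof. intros; unfold hnorm; apply sqrt_le_of_sq; auto. Qed.

Lemma cauchy_schwarz_sq (x y : H) : ip x y * ip x y <= ip x x * ip y y.
Proof.
  destruct (Req_dec (ip y y) 0) as [E|E].
  - apply hinner_def in E. subst y. rewrite !ip_0r. lra.
  - set (s := - ip x y / ip y y).
    pose proof (hinner_pos H (x +v s *v y)) as P.
    rewrite hinner_addl, !ip_addr, !hinner_scall, !ip_scalr, (hinner_sym _ y x) in P.
    pose proof (hinner_pos H y).
    assert (Hp : 0 < ip y y) by lra.
    unfold s in P. field_simplify in P; [|lra].
    apply Rmult_le_reg_r with (ip y y); auto.
    replace (ip x y * ip x y * ip y y) with (ip y y * (ip x y * ip x y)) by ring.
    assert (0 <= (ip x x * ip y y - ip x y ^ 2) / ip y y) by lra.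
    assert (0 <= ip x x * ip y y - ip x y ^ 2).
    { apply Rmult_le_reg_r with (/ ip y y). apply Rinv_0_lt_compat; lra.
      rewrite Rmult_0_l. exact H1. }
    nra.
Qed.

Lemma cauchy_schwarz (x y : H) : Rabs (ip x y) <= hnorm x * hnorm y.
Proof.
  apply Rsqr_incr_0_var.
  - rewrite <- Rsqr_abs. unfold Rsqr.
    replace (hnorm x * hnorm y * (hnorm x * hnorm y)) with
      ((hnorm x * hnorm x) * (hnorm y * hnorm y)) by ring.
    rewrite !hnorm_sq. apply cauchy_schwarz_sq.
  - pose proof (hnorm_pos x); pose proof (hnorm_pos y); nra.
Qed.


Lemma lin_0 (S : H -> H) : linear_op S -> S 0v = 0v.
Proof. intros [_ Hs]. rewrite <- (hscal_0l 0v) at 1. rewrite Hs. apply hscal_0l. Qed.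

Lemma lin_add (S : H -> H) x y : linear_op S -> S (x +v y) = S x +v S y.
Proof. intros [Ha _]. apply Ha. Qed.

Lemma lin_scal (S : H -> H) a x : linear_op S -> S (a *v x) = a *v S x.
Proof. intros [_ Hs]. apply Hs. Qed.

Definition Eset (Q : H -> Prop) (S : H -> H) :=
  fun r => exists x, Q x /\ hnorm x <= 1 /\ r = hnorm (S x).

Lemma opnorm_on_lub (Q : H -> Prop) (S : H -> H) :
  Q 0v -> (exists C, forall x, Q x -> hnorm x <= 1 -> hnorm (S x) <= C) ->
  is_lub (Eset Q S) (opnorm_on Q S).
Proof.
  intros HQ [C HC]. unfold opnorm_on. apply epsilon_spec.
  destruct (completeness (Eset Q S)) as [m Hm].
  - exists C. intros r [x [Qx [Hx ->]]]. auto.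
  - exists (hnorm (S 0v)). exists 0v. split; auto. rewrite hnorm_0. split; lra.
  - exists m. exact Hm.
Qed.

Definition bnd (S : H -> H) := exists C, forall x, hnorm x <= 1 -> hnorm (S x) <= C.

Lemma bounded_bnd (S : H -> H) : bounded_linear S -> bnd S.
Proof.
  intros [_ [C HC]]. exists (Rabs C). intros x Hx.
  eapply Rle_trans; [apply HC|]. pose proof (hnorm_pos x).
  pose proof (Rle_abs C). pose proof (Rabs_pos C). nra.
Qed.

Lemma opnorm_lub (S : H -> H) : bnd S -> is_lub (Eset (fun _ => True) S) (opnorm S).
Proof. intros [C HC]. apply opnorm_on_lub; auto. exists C; auto. Qed.

Lemma opnorm_on_ge (Q : H -> Prop) (S : H -> H) x :
  Q 0v -> (exists C, forall x, Q x -> hnorm x <= 1 -> hnorm (S x) <= C) ->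
  Q x -> hnorm x <= 1 -> hnorm (S x) <= opnorm_on Q S.
Proof. intros H1 H2 Qx Hx. apply (@opnorm_on_lub Q S H1 H2). exists x; auto. Qed.

Lemma opnorm_on_le (Q : H -> Prop) (S : H -> H) M :
  Q 0v -> (exists C, forall x, Q x -> hnorm x <= 1 -> hnorm (S x) <= C) ->
  (forall x, Q x -> hnorm x <= 1 -> hnorm (S x) <= M) -> opnorm_on Q S <= M.
Proof.
  intros H1 H2 HM. apply (@opnorm_on_lub Q S H1 H2). intros r [x [Qx [Hx ->]]]. auto.
Qed.

Lemma opnorm_ge (S : H -> H) x : bnd S -> hnorm x <= 1 -> hnorm (S x) <= opnorm S.
Proof. intros [C HC] Hx. apply opnorm_on_ge; auto. exists C; auto. Qed.

Lemma opnorm_le (S : H -> H) M : bnd S ->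
  (forall x, hnorm x <= 1 -> hnorm (S x) <= M) -> opnorm S <= M.
Proof. intros [C HC] HM. apply opnorm_on_le; auto. exists C; auto. Qed.

Lemma opnorm_pos (S : H -> H) : linear_op S -> bnd S -> 0 <= opnorm S.
Proof.
  intros L B. rewrite <- hnorm_0. rewrite <- (lin_0 _ L). apply opnorm_ge; auto.
  rewrite hnorm_0; lra.
Qed.

Lemma opnorm_on_bound (Q : H -> Prop) (S : H -> H) x :
  linear_op S -> Q 0v -> (forall a y, Q y -> Q (a *v y)) ->
  (exists C, forall x, Q x -> hnorm x <= 1 -> hnorm (S x) <= C) ->
  Q x -> hnorm (S x) <= opnorm_on Q S * hnorm x.
Proof.
  intros L Q0 Qs B Qx.
  destruct (Req_dec (hnorm x) 0) as [E|E].
  - apply hnorm_eq0 in E. subst x. rewrite (lin_0 _ L), hnorm_0. lra.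
  - pose proof (hnorm_pos x). set (u := (/ hnorm x) *v x).
    assert (Hu : hnorm u = 1).
    { unfold u. rewrite hnorm_scal, Rabs_right. field; lra.
      apply Rle_ge, Rlt_le, Rinv_0_lt_compat; lra. }
    assert (Hx : x = hnorm x *v u).
    { unfold u. rewrite hscal_assoc, Rinv_r, hscal_1; auto. }
    pose proof (@opnorm_on_ge Q S _ Q0 B (Qs _ _ Qx) (Req_le _ _ Hu)) as G. fold u in G.
    rewrite Hx at 1. rewrite (lin_scal _ _ _ L), hnorm_scal, Rabs_right by lra.
    pose proof (hnorm_pos (S u)). nra.
Qed.

Lemma opnorm_bound (S : H -> H) x : linear_op S -> bnd S ->
  hnorm (S x) <= opnorm S * hnorm x.
Proof.
  intros L [C HC]. apply opnorm_on_bound; auto. exists C; auto.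
Qed.

Lemma opnorm_scal (S : H -> H) (lam : R) : linear_op S -> bnd S ->
  opnorm (fun x => lam *v S x) = Rabs lam * opnorm S.
Proof.
  intros L B.
  assert (B' : bnd (fun x => lam *v S x)).
  { destruct B as [C HC]. exists (Rabs lam * C). intros x Hx.
    rewrite hnorm_scal. apply Rmult_le_compat_l; auto. apply Rabs_pos. }
  apply Rle_antisym.
  - apply opnorm_le; auto. intros x Hx. rewrite hnorm_scal.
    apply Rmult_le_compat_l; [apply Rabs_pos|]. apply opnorm_ge; auto.
  - destruct (Req_dec lam 0) as [->|Hl].
    + rewrite Rabs_R0, Rmult_0_l. apply opnorm_pos; auto.
      split; intros; [rewrite (lin_add _ _ _ L), hscal_addr; auto |
        rewrite (lin_scal _ _ _ L), !hscal_assoc, Rmult_comm; auto].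
    + assert (0 < Rabs lam) by (apply Rabs_pos_lt; auto).
      set (N := opnorm (fun x => lam *v S x)).
      assert (K : opnorm S <= N * / Rabs lam).
      2:{ apply Rmult_le_compat_l with (r := Rabs lam) in K; [|lra].
          rewrite (Rmult_comm N), <- Rmult_assoc, Rinv_r, Rmult_1_l in K; lra. }
      apply opnorm_le; auto. intros x Hx.
      pose proof (opnorm_ge _ x B' Hx) as G. simpl in G. rewrite hnorm_scal in G. fold N in G.
      apply Rmult_le_reg_l with (Rabs lam); auto.
      replace (Rabs lam * (N * / Rabs lam)) with N by (field; lra). lra.
Qed.

Lemma bounded_linear_comb (S U : H -> H) (a : R) :
  bounded_linear S -> bounded_linear U -> bounded_linear (fun x => S x +v a *v U x).
Proof.
  intros [LS [C1 H1]] [LU [C2 H2]]. split.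
  - split.
    + intros x y. rewrite (lin_add _ _ _ LS), (lin_add _ _ _ LU), hscal_addr.
      rewrite <- !hadd_assoc. f_equal. rewrite !hadd_assoc. f_equal. apply hadd_comm.
    + intros b x. rewrite (lin_scal _ _ _ LS), (lin_scal _ _ _ LU), hscal_addr, !hscal_assoc.
      f_equal. f_equal. ring.
  - exists (Rabs C1 + Rabs a * Rabs C2). intro x.
    assert (T : hnorm (S x +v a *v U x) <= hnorm (S x) + hnorm (a *v U x)).
    { apply norm_le_iff. pose proof (hnorm_pos (S x)); pose proof (hnorm_pos (a *v U x)); lra.
      rewrite hinner_addl, !ip_addr. rewrite (hinner_sym _ (a *v U x) (S x)).
      pose proof (cauchy_schwarz (S x) (a *v U x)). pose proof (Rle_abs (ip (S x) (a *v U x))).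
      rewrite <- !hnorm_sq. nra. }
    eapply Rle_trans; [exact T|]. rewrite hnorm_scal.
    pose proof (H1 x); pose proof (H2 x); pose proof (hnorm_pos x).
    pose proof (Rle_abs C1); pose proof (Rle_abs C2); pose proof (Rabs_pos a).
    assert (hnorm (U x) <= Rabs C2 * hnorm x) by nra. nra.
Qed.


Fixpoint ssum (n : nat) (f : nat -> R) : R :=
  match n with O => 0 | S k => ssum k f + f k end.

Lemma ssum_ext n f g : (forall i, (i < n)%nat -> f i = g i) -> ssum n f = ssum n g.
Proof.
  induction n; simpl; intros E; auto. rewrite IHn by (intros; apply E; lia). rewrite E by lia. auto.
Qed.

Lemma ssum_plus n f g : ssum n (fun i => f i + g i) = ssum n f + ssum n g.
Proof. induction n; simpl; [ring| rewrite IHn; ring]. Qed.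

Lemma ssum_scal n a f : ssum n (fun i => a * f i) = a * ssum n f.
Proof. induction n; simpl; [ring| rewrite IHn; ring]. Qed.

Lemma ssum_le n f g : (forall i, (i < n)%nat -> f i <= g i) -> ssum n f <= ssum n g.
Proof.
  induction n; simpl; intros E; [lra|]. pose proof (E n ltac:(lia)).
  assert (ssum n f <= ssum n g) by (apply IHn; intros; apply E; lia). lra.
Qed.

Lemma ssum_nonneg n f : (forall i, (i < n)%nat -> 0 <= f i) -> 0 <= ssum n f.
Proof. intro E. replace 0 with (ssum n (fun _ => 0)). apply ssum_le; auto.
  clear E; induction n; simpl; auto; rewrite IHn; ring. Qed.

Lemma ssum_single_le n f m : (m < n)%nat -> (forall i, (i < n)%nat -> 0 <= f i) -> f m <= ssum n f.
Proof.
  induction n; intros Hm E; [lia|]. simpl.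
  destruct (Nat.eq_dec m n) as [->|Hne].
  - pose proof (ssum_nonneg n f ltac:(intros; apply E; lia)). lra.
  - pose proof (E n ltac:(lia)). assert (f m <= ssum n f) by (apply IHn; [lia| intros; apply E; lia]). lra.
Qed.

Definition ON (n : nat) (e : nat -> H) : Prop :=
  (forall i, (i < n)%nat -> ip (e i) (e i) = 1) /\
  (forall i j, (i < n)%nat -> (j < n)%nat -> i <> j -> ip (e i) (e j) = 0).

Lemma ON_le n m e : (m <= n)%nat -> ON n e -> ON m e.
Proof. intros Hm [A B]. split; intros; [apply A| apply B]; auto; lia. Qed.

Lemma lc_S n e c : lin_comb (S n) e c = lin_comb n e c +v c n *v e n.
Proof. reflexivity. Qed.

Lemma lc_ext n e c d : (forall i, (i < n)%nat -> c i = d i) -> lin_comb n e c = lin_comb n e d.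
Proof.
  induction n; simpl; intros E; auto. rewrite IHn by (intros; apply E; lia). rewrite E by lia. auto.
Qed.

Lemma add_swap4 (a b c d : H) : (a +v b) +v (c +v d) = (a +v c) +v (b +v d).
Proof.
  rewrite !hadd_assoc. f_equal. rewrite <- !hadd_assoc. f_equal. apply hadd_comm.
Qed.

Lemma lc_add n e c d : lin_comb n e (fun i => c i + d i) = lin_comb n e c +v lin_comb n e d.
Proof.
  induction n; simpl. { symmetry; apply hadd_0. }
  rewrite IHn, hscal_addl. apply add_swap4.
Qed.

Lemma lc_scal n e c a : lin_comb n e (fun i => a * c i) = a *v lin_comb n e c.
Proof.
  induction n; simpl. { symmetry; apply hscal_0r. }
  rewrite IHn, hscal_addr, hscal_assoc. auto.
Qed.

Lemma lc_in (P : H -> Prop) n e c : is_subspace P -> (forall i, (i < n)%nat -> P (e i)) ->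
  P (lin_comb n e c).
Proof.
  intros [P0 [Pa Ps]]. induction n; simpl; intros E; auto.
  apply Pa; [apply IHn; intros; apply E; lia| apply Ps, E; lia].
Qed.

Lemma ip_lc_l n e c y : ip (lin_comb n e c) y = ssum n (fun i => c i * ip (e i) y).
Proof. induction n; simpl. apply ip_0l. rewrite hinner_addl, hinner_scall, IHn. auto. Qed.

Lemma ip_lc_r n e c y : ip y (lin_comb n e c) = ssum n (fun i => c i * ip y (e i)).
Proof. rewrite hinner_sym, ip_lc_l. apply ssum_ext. intros; rewrite hinner_sym; auto. Qed.

Lemma ip_lc_orth n e c y : (forall i, (i < n)%nat -> ip (e i) y = 0) -> ip (lin_comb n e c) y = 0.
Proof.
  intro E. rewrite ip_lc_l. replace 0 with (ssum n (fun _ => 0)).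
  apply ssum_ext; intros; rewrite E; auto; ring.
  clear E; induction n; simpl; auto; rewrite IHn; ring.
Qed.

Lemma ip_lc_e n m e c j : ON m e -> (n <= m)%nat -> (j < n)%nat ->
  ip (lin_comb n e c) (e j) = c j.
Proof.
  intros [O1 O2] Hnm. induction n; intros Hj; [lia|]. simpl.
  rewrite hinner_addl, hinner_scall.
  destruct (Nat.eq_dec j n) as [->|Hne].
  - rewrite ip_lc_orth, O1 by (try intros; try apply O2; lia). ring.
  - rewrite IHn, O2 by lia. ring.
Qed.

Lemma ip_lc_lc n e c d : ON n e ->
  ip (lin_comb n e c) (lin_comb n e d) = ssum n (fun i => c i * d i).
Proof.
  intro O. rewrite ip_lc_r. apply ssum_ext. intros i Hi.
  rewrite (ip_lc_e n n e c i O) by lia. ring.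
Qed.

Definition proj (n : nat) (e : nat -> H) (y : H) : H := lin_comb n e (fun i => ip y (e i)).

Definition hsub (x y : H) : H := x +v (-1) *v y.

Lemma add_sub (a b : H) : a +v hsub b a = b.
Proof.
  unfold hsub. rewrite hadd_assoc, (hadd_comm _ a b), <- hadd_assoc, sub_self. apply hadd_0r.
Qed.

Lemma ip_subl (x y z : H) : ip (hsub x y) z = ip x z - ip y z.
Proof. unfold hsub. rewrite hinner_addl, hinner_scall. ring. Qed.

Lemma ip_subr (x y z : H) : ip z (hsub x y) = ip z x - ip z y.
Proof. unfold hsub. rewrite ip_addr, ip_scalr. ring. Qed.

Lemma proj_orth n e y j : ON n e -> (j < n)%nat -> ip (hsub y (proj n e y)) (e j) = 0.
Proof. intros O Hj. rewrite ip_subl. unfold proj. rewrite (ip_lc_e n n e _ j O) by lia. ring. Qed.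

Lemma proj_orth_lc n e y c : ON n e -> ip (hsub y (proj n e y)) (lin_comb n e c) = 0.
Proof.
  intro O. rewrite hinner_sym. apply ip_lc_orth. intros i Hi. rewrite hinner_sym.
  apply proj_orth; auto.
Qed.

Lemma bessel n e y : ON n e ->
  ip (hsub y (proj n e y)) (hsub y (proj n e y)) = ip y y - ssum n (fun i => ip y (e i) * ip y (e i)).
Proof.
  intro O. rewrite ip_subl, !ip_subr. unfold proj. rewrite ip_lc_lc by auto.
  rewrite ip_lc_l, ip_lc_r. rewrite (ssum_ext n (fun i => ip y (e i) * ip (e i) y) (fun i => ip y (e i) * ip y (e i)))
   by (intros; rewrite (hinner_sym _ (e i)); auto). ring.
Qed.

Lemma bessel_le n e y : ON n e -> ssum n (fun i => ip y (e i) * ip y (e i)) <= ip y y.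
Proof. intro O. pose proof (hinner_pos H (hsub y (proj n e y))). rewrite bessel in H0; auto. lra. Qed.

Lemma proj_id n e c : ON n e -> proj n e (lin_comb n e c) = lin_comb n e c.
Proof. intro O. unfold proj. apply lc_ext. intros i Hi. apply (ip_lc_e n n); auto. Qed.


Lemma proj_add n e x y : proj n e (x +v y) = proj n e x +v proj n e y.
Proof. unfold proj. rewrite <- lc_add. apply lc_ext. intros; apply hinner_addl. Qed.

Lemma proj_scal n e a x : proj n e (a *v x) = a *v proj n e x.
Proof. unfold proj. rewrite <- lc_scal. apply lc_ext. intros; apply hinner_scall. Qed.

Lemma proj_in n e x : ON n e -> proj n e (proj n e x) = proj n e x.
Proof. intro O. unfold proj at 2 3. apply proj_id; auto. Qed.

Lemma normalize (w : H) : w <> 0v ->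
  ip ((/ hnorm w) *v w) ((/ hnorm w) *v w) = 1 /\ w = hnorm w *v ((/ hnorm w) *v w)
  /\ 0 < hnorm w.
Proof.
  intro Hw. assert (Hn : hnorm w <> 0) by (intro E; apply Hw, hnorm_eq0, E).
  pose proof (hnorm_pos w).
  split; [|split; [|lra]].
  - rewrite hinner_scall, ip_scalr, <- hnorm_sq. field; auto.
  - rewrite hscal_assoc, Rinv_r, hscal_1; auto.
Qed.

Lemma ext_ON m e (u : H) : ON m e -> ip u u = 1 -> (forall i, (i < m)%nat -> ip (e i) u = 0) ->
  ON (S m) (fun i => if Nat.eqb i m then u else e i).
Proof.
  intros [O1 O2] Hu Ho. split.
  - intros i Hi. destruct (Nat.eqb_spec i m); auto. apply O1; lia.
  - intros i j Hi Hj Hij. destruct (Nat.eqb_spec i m), (Nat.eqb_spec j m).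
    + lia. + rewrite hinner_sym; apply Ho; lia. + apply Ho; lia. + apply O2; lia.
Qed.

Lemma proj_ext n e e' x : (forall i, (i < n)%nat -> e i = e' i) -> proj n e x = proj n e' x.
Proof.
  unfold proj. induction n; simpl; intros E; auto.
  rewrite IHn by (intros; apply E; lia). rewrite E by lia. auto.
Qed.

Lemma GS (P : H -> Prop) : finite_dim_subspace P ->
  exists m e, ON m e /\ (forall i, (i < m)%nat -> P (e i)) /\ (forall x, P x -> proj m e x = x).
Proof.
  intros [HP [n [v [Hv Hspan]]]].
  assert (Claim : forall k, (k <= n)%nat -> exists m e, ON m e /\ (forall i, (i < m)%nat -> P (e i))
     /\ forall c, proj m e (lin_comb k v c) = lin_comb k v c).
  { induction k; intros Hk.
    - exists 0%nat, (fun _ => 0v). split; [split; intros; lia|]. split; [intros; lia|].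
      intros c. simpl. unfold proj. reflexivity.
    - destruct (IHk ltac:(lia)) as [m [e [O [Pe Sp]]]].
      set (w := hsub (v k) (proj m e (v k))).
      destruct (classic (w = 0v)) as [W0|W0].
      + exists m, e. split; auto. split; auto. intro c. simpl.
        rewrite proj_add, proj_scal, Sp. f_equal. f_equal.
        pose proof (add_sub (proj m e (v k)) (v k)). fold w in H0. rewrite W0, hadd_0r in H0.
        rewrite <- H0 at 2. reflexivity.
      + destruct (normalize _ W0) as [Hu [Hw Hpos]].
        set (u := (/ hnorm w) *v w) in *.
        assert (Hou : forall i, (i < m)%nat -> ip (e i) u = 0).
        { intros i Hi. unfold u. rewrite ip_scalr, hinner_sym. unfold w. rewrite proj_orth; auto. ring. }
        set (e' := fun i => if Nat.eqb i m then u else e i).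
        assert (O' := ext_ON m e u O Hu Hou). fold e' in O'.
        assert (Hee : forall i, (i < m)%nat -> e i = e' i).
        { intros i Hi. unfold e'. destruct (Nat.eqb_spec i m); auto; lia. }
        assert (Hem : e' m = u) by (unfold e'; rewrite Nat.eqb_refl; auto).
        assert (Old : forall x, proj m e x = x -> proj (S m) e' x = x).
        { intros x Hx. unfold proj at 1. simpl. fold (proj m e' x).
          rewrite <- (proj_ext m e e' x Hee), Hx, Hem.
          replace (ip x u) with 0. rewrite hscal_0l; apply hadd_0r.
          rewrite <- Hx. unfold proj. rewrite ip_lc_orth; auto. }
        exists (S m), e'. split; auto. split.
        { intros i Hi. unfold e'. destruct (Nat.eqb_spec i m).
          - pose proof HP as [P0 [Pa Ps]]. unfold u, w. apply Ps. unfold hsub.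
            apply Pa; [apply Hv; lia| apply Ps]. unfold proj. apply lc_in; auto.
          - apply Pe; lia. }
        intro c. simpl. rewrite proj_add, proj_scal, Old by apply Sp. f_equal. f_equal.
        unfold proj at 1. simpl. fold (proj m e' (v k)).
        rewrite <- (proj_ext m e e' _ Hee), Hem.
        assert (ip (v k) u = hnorm w).
        { rewrite <- (add_sub (proj m e (v k)) (v k)). fold w. rewrite hinner_addl.
          unfold proj at 1. rewrite ip_lc_orth by auto. rewrite Hw at 1.
          rewrite hinner_scall, Hu. ring. }
        rewrite H0, <- Hw. apply add_sub. }
  destruct (Claim n (le_n n)) as [m [e [O [Pe Sp]]]].
  exists m, e. split; auto. split; auto. intros x Px. destruct (Hspan x Px) as [c ->]. apply Sp.
Qed.


Definition bil (B : H -> H -> R) (M : R) : Prop :=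
  (forall x y z, B (x +v y) z = B x z + B y z) /\ (forall a x y, B (a *v x) y = a * B x y) /\
  (forall x y, B x y = B y x) /\ (forall x y, Rabs (B x y) <= M * hnorm x * hnorm y).

Lemma bil_expand B M (x y : H) (a : R) : bil B M ->
  B (x +v a *v y) (x +v a *v y) = B x x + 2 * a * B x y + a * a * B y y.
Proof.
  intros [Ba [Bs [Bsym _]]]. rewrite Ba, Bs, (Bsym x (x +v a *v y)), (Bsym y (x +v a *v y)), !Ba, !Bs, (Bsym y x). ring.
Qed.

Lemma bil_0 B M : bil B M -> B 0v 0v = 0.
Proof. intros [_ [Bs _]]. rewrite <- (hscal_0l 0v) at 1. rewrite Bs. ring. Qed.

Definition sp m e x := proj m e x = x.

Lemma lc_zero n e c : (forall i, (i < n)%nat -> c i = 0) -> lin_comb n e c = 0v.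
Proof.
  intro E. rewrite (lc_ext n e c (fun i => 0 * c i)) by (intros; rewrite E; auto; ring).
  rewrite lc_scal. apply hscal_0l.
Qed.

Lemma proj_S m e x : proj (S m) e x = proj m e x +v ip x (e m) *v e m.
Proof. reflexivity. Qed.

Lemma proj_of_orth m e f : (forall i, (i < m)%nat -> ip (e i) f = 0) -> proj m e f = 0v.
Proof. intro E. unfold proj. apply lc_zero. intros; rewrite hinner_sym; auto. Qed.

Lemma coerc m : forall e B M, ON m e -> bil B M ->
  (forall x, sp m e x -> x <> 0v -> 0 < B x x) ->
  exists delta, 0 < delta /\ forall x, sp m e x -> delta * ip x x <= B x x.
Proof.
  induction m as [|m IH]; intros e B M O HB Hpos.
  - exists 1. split; [lra|]. intros x Hx. unfold sp, proj in Hx. simpl in Hx. subst x.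
    rewrite ip_0l, (bil_0 _ _ HB). lra.
  - set (f := e m).
    pose proof O as [O1 O2].
    assert (Hff : ip f f = 1) by (apply O1; lia).
    assert (Hfo : forall i, (i < m)%nat -> ip (e i) f = 0) by (intros; apply O2; lia).
    assert (Om : ON m e) by (apply (ON_le (S m)); auto).
    assert (Hnf : hnorm f = 1) by (unfold hnorm; rewrite Hff; apply sqrt_1).
    assert (Spf : sp (S m) e f).
    { unfold sp. rewrite proj_S, proj_of_orth by auto. fold f. rewrite Hff, hscal_1. apply hadd_0. }
    assert (Hf0 : f <> 0v) by (intro E; rewrite E, ip_0l in Hff; lra).
    set (E := B f f). assert (HE : 0 < E) by (apply Hpos; auto).
    pose proof HB as [Ba [Bs [Bsym Bb]]].
    set (r := fun u w => B u w - B u f * B w f / E).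
    assert (Hr : bil r (M + M * M / E)).
    { unfold r. split; [|split; [|split]].
      - intros; rewrite !Ba. field. lra.
      - intros; rewrite !Bs. field. lra.
      - intros; rewrite Bsym. field. lra.
      - intros x y. pose proof (Bb x y). pose proof (Bb x f). pose proof (Bb y f).
        rewrite Hnf in *. pose proof (hnorm_pos x); pose proof (hnorm_pos y).
        assert (0 <= M) by (pose proof (Rabs_pos (B f f)); pose proof (Bb f f); rewrite Hnf in *; nra).
        eapply Rle_trans; [apply Rabs_triang|]. rewrite Rabs_Ropp.
        unfold Rdiv. rewrite !Rabs_mult, (Rabs_inv E), (Rabs_right E) by lra.
        assert (Rabs (B x f) * Rabs (B y f) <= M * hnorm x * (M * hnorm y)).
        { apply Rmult_le_compat; try apply Rabs_pos; nra. }
        assert (Rabs (B x f) * Rabs (B y f) * / E <= M * hnorm x * (M * hnorm y) * / E).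
        { apply Rmult_le_compat_r; auto. left; apply Rinv_0_lt_compat; lra. }
        assert (M * hnorm x * (M * hnorm y) * / E = M * M / E * hnorm x * hnorm y) by (field; lra).
        nra. }
    assert (Hrpos : forall v, sp m e v -> v <> 0v -> 0 < r v v).
    { intros v Hv Hv0. set (beta := B v f / E).
      set (w := v +v (- beta) *v f).
      assert (Hvf : ip v f = 0) by (rewrite <- Hv; unfold proj; apply ip_lc_orth; auto).
      assert (Sw : sp (S m) e w).
      { unfold sp. rewrite proj_S. unfold w at 1. rewrite proj_add, proj_scal, Hv, proj_of_orth by auto.
        rewrite hscal_0r, hadd_0r. fold f. unfold w. rewrite hinner_addl, hinner_scall, Hvf, Hff.
        f_equal. f_equal. ring. }
      assert (Hw0 : w <> 0v).
      { intro W. apply Hv0. apply hinner_def.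
        assert (v = beta *v f).
        { apply (hadd_cancel ((-beta) *v f)). rewrite hadd_comm. fold w. rewrite W.
          rewrite <- hscal_addl. symmetry. replace (- beta + beta) with 0 by ring. apply hscal_0l. }
        rewrite H0 at 1. rewrite hinner_scall, hinner_sym, Hvf. ring. }
      pose proof (Hpos w Sw Hw0). unfold w in H0. rewrite (bil_expand _ _ _ _ _ HB) in H0.
      unfold r. fold E. unfold beta in H0. replace (B v v - B v f * B v f / E) with
        (B v v + 2 * - (B v f / E) * B v f + - (B v f / E) * - (B v f / E) * E) by (field; lra).
      exact H0. }
    destruct (IH e r _ Om Hr Hrpos) as [d1 [Hd1 Hd]].
    set (C := M / E).
    assert (HM0 : 0 <= M) by (pose proof (Rabs_pos (B f f)); pose proof (Bb f f); rewrite Hnf in *; nra).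
    set (theta := d1 / (2 * (E * C * C + d1))).
    assert (HC0 : 0 <= C) by (unfold C; apply Rmult_le_pos; [lra| left; apply Rinv_0_lt_compat; lra]).
    assert (Ht0 : 0 < theta) by (unfold theta; apply Rdiv_lt_0_compat; nra).
    assert (Ht1 : theta <= 1 /\ theta * E * C * C <= d1 / 2).
    { unfold theta. split.
      - apply Rmult_le_reg_r with (2 * (E * C * C + d1)); [nra|].
        unfold Rdiv. rewrite Rmult_assoc, Rinv_l by nra. nra.
      - apply Rmult_le_reg_r with (2 * (E * C * C + d1)); [nra|].
        replace (d1 / (2 * (E * C * C + d1)) * E * C * C * (2 * (E * C * C + d1))) with (d1 * (E * C * C))
          by (field; nra). nra. }
    exists (Rmin (d1 / 2) (theta * E / 2)). split.
    { apply Rmin_glb_lt; nra. }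
    intros x Hx. set (v := proj m e x). set (s := ip x f).
    assert (Hxd : x = v +v s *v f) by (unfold sp in Hx; rewrite proj_S in Hx; rewrite <- Hx at 1; auto).
    assert (Sv : sp m e v) by (apply proj_in; auto).
    assert (Hvf : ip v f = 0) by (unfold v, proj; apply ip_lc_orth; auto).
    assert (Hxx : ip x x = ip v v + s * s).
    { rewrite Hxd, hinner_addl, !ip_addr, !hinner_scall, !ip_scalr, (hinner_sym _ f v), Hvf, Hff. ring. }
    assert (HBx : B x x = r v v + E * (s + B v f / E) * (s + B v f / E)).
    { rewrite Hxd, (bil_expand _ _ _ _ _ HB). unfold r. fold E. field. lra. }
    pose proof (Hd v Sv) as Hrv.
    assert (Hbeta : (B v f / E) * (B v f / E) <= C * C * ip v v).
    { pose proof (Bb v f). rewrite Hnf in H0. rewrite <- hnorm_sq.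
      assert (Rabs (B v f / E) <= C * hnorm v).
      { unfold Rdiv, C. rewrite Rabs_mult, Rabs_inv, (Rabs_right E) by lra.
        apply Rmult_le_reg_r with E; auto. field_simplify; try lra. }
      pose proof (Rabs_pos (B v f / E)). rewrite <- (Rabs_mult (B v f / E)) || idtac.
      replace ((B v f / E) * (B v f / E)) with (Rabs (B v f / E) * Rabs (B v f / E))
        by (rewrite <- Rabs_mult; apply Rabs_pos_eq; nra).
      pose proof (hnorm_pos v). nra. }
    set (be := B v f / E) in *.
    assert (Hsq : s * s / 2 - be * be <= (s + be) * (s + be)) by (pose proof (Rle_0_sqr (s + 2*be)); unfold Rsqr in *; lra).
    assert (K1 : theta * E * (s * s / 2) - d1 / 2 * ip v v <= E * (s + be) * (s + be)).
    { pose proof (hinner_pos H v). destruct Ht1 as [Ht1 Ht2].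
      assert (theta * E * (s * s / 2 - be * be) <= theta * E * ((s + be) * (s + be))).
      { apply Rmult_le_compat_l; nra. }
      assert (theta * E * ((s + be) * (s + be)) <= E * ((s+be) * (s+be))).
      { assert (0 <= (s+be)*(s+be)) by (pose proof (Rle_0_sqr (s+be)); unfold Rsqr in *; lra). apply Rmult_le_compat_r; nra. }
      assert (theta * E * (be * be) <= theta * E * (C * C * ip v v)).
      { apply Rmult_le_compat_l; nra. }
      nra. }
    rewrite Hxx, HBx.
    pose proof (Rmin_l (d1/2) (theta * E / 2)). pose proof (Rmin_r (d1/2) (theta * E / 2)).
    pose proof (hinner_pos H v). assert (0 <= s * s) by nra.
    set (mn := Rmin (d1 / 2) (theta * E / 2)) in *.
    assert (mn * ip v v <= d1 / 2 * ip v v) by (apply Rmult_le_compat_r; lra).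
    assert (mn * (s * s) <= theta * E / 2 * (s * s)) by (apply Rmult_le_compat_r; lra).
    nra.
Qed.


Lemma quad_zero (al be : R) : (forall s, 2 * s * al + s * s * be <= 0) -> al = 0.
Proof.
  intro Hq. set (eta := / (1 + Rabs be)).
  assert (He : 0 < eta) by (unfold eta; apply Rinv_0_lt_compat; pose proof (Rabs_pos be); lra).
  assert (He1 : eta * Rabs be < 1).
  { assert (E1 : eta * (1 + Rabs be) = 1) by (unfold eta; field; pose proof (Rabs_pos be); lra). nra. }
  pose proof (Hq (eta * al)) as Q.
  assert (P : 0 < 2 * eta + eta * eta * be).
  { pose proof (Rle_abs (- be)). rewrite Rabs_Ropp in H0. nra. }
  assert (al * al * (2 * eta + eta * eta * be) <= 0) by nra.
  destruct (Req_dec al 0); auto.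
  assert (0 < al * al) by nra. nra.
Qed.

Lemma sq_le_of_norm (a b : R) : 0 <= a -> a <= b -> a * a <= b * b.
Proof. intros; nra. Qed.

Lemma ip_T_expand (S : H -> H) x a z : linear_op S ->
  ip (S (x +v a *v z)) (S (x +v a *v z)) = ip (S x) (S x) + 2 * a * ip (S x) (S z) + a * a * ip (S z) (S z).
Proof.
  intro L. rewrite (lin_add _ _ _ L), (lin_scal _ _ _ L).
  rewrite hinner_addl, !ip_addr, !hinner_scall, !ip_scalr, (hinner_sym _ (S z) (S x)). ring.
Qed.

Lemma ip_expand x a z : ip (x +v a *v z) (x +v a *v z) = ip x x + 2 * a * ip x z + a * a * ip z z.
Proof. rewrite hinner_addl, !ip_addr, !hinner_scall, !ip_scalr, (hinner_sym _ z x). ring. Qed.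

Lemma normset_ip (T : H -> H) x : normset T x -> ip x x = 1 /\ ip (T x) (T x) = opnorm T * opnorm T.
Proof. intros [N1 N2]. rewrite <- !hnorm_sq, N1, N2. split; ring. Qed.

Lemma variational (T : H -> H) x : bounded_linear T -> normset T x ->
  forall z, ip (T x) (T z) = opnorm T * opnorm T * ip x z.
Proof.
  intros BT Nx z. pose proof BT as [L _]. pose proof (bounded_bnd _ BT) as B.
  destruct (normset_ip _ _ Nx) as [I1 I2]. set (t := opnorm T) in *.
  assert (Ht : 0 <= t) by (apply opnorm_pos; auto).
  enough (ip (T x) (T z) - t * t * ip x z = 0) by lra.
  apply (quad_zero _ (ip (T z) (T z) - t * t * ip z z)). intro s.
  pose proof (opnorm_bound T (x +v s *v z) L B) as Hb. fold t in Hb.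
  pose proof (hnorm_pos (T (x +v s *v z))).
  pose proof (sq_le_of_norm _ _ H0 Hb) as Hs.
  rewrite hnorm_sq in Hs.
  replace (t * hnorm (x +v s *v z) * (t * hnorm (x +v s *v z))) with
    (t * t * (hnorm (x +v s *v z) * hnorm (x +v s *v z))) in Hs by ring.
  rewrite hnorm_sq, (ip_T_expand _ _ _ _ L), ip_expand, I1, I2 in Hs. nra.
Qed.

Lemma opnorm_T_pos (T : H -> H) : bounded_linear T -> (exists x, T x <> 0v) -> 0 < opnorm T.
Proof.
  intros BT [x Hx]. pose proof BT as [L _]. pose proof (bounded_bnd _ BT) as B.
  pose proof (opnorm_bound T x L B).
  assert (0 < hnorm (T x)).
  { pose proof (hnorm_pos (T x)). destruct (Req_dec (hnorm (T x)) 0) as [E|E]; [|lra].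
    exfalso; apply Hx, hnorm_eq0, E. }
  pose proof (hnorm_pos x). pose proof (opnorm_pos _ L B). nra.
Qed.

Lemma easy_dir (T A : H -> H) (eps : R) x : bounded_linear T -> bounded_linear A -> normset T x ->
  Rabs (ip (T x) (A x)) <= eps * opnorm T * opnorm A -> BJ_orth_eps eps T A.
Proof.
  intros BT BA Nx Hq lam. pose proof BA as [LA _]. pose proof (bounded_bnd _ BA) as BdA.
  pose proof (bounded_linear_comb _ _ lam BT BA) as BL. pose proof (bounded_bnd _ BL) as BdL.
  rewrite (opnorm_scal A lam LA BdA).
  pose proof (opnorm_ge _ x BdL (Req_le _ _ (proj1 Nx))) as G. simpl in G.
  pose proof (hnorm_pos (T x +v lam *v A x)).
  pose proof (sq_le_of_norm _ _ H0 G) as G2. rewrite hnorm_sq in G2.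
  rewrite ip_expand in G2. destruct (normset_ip _ _ Nx) as [_ I2].
  rewrite I2 in G2. pose proof (hinner_pos H (A x)).
  pose proof (Rle_abs (ip (T x) (A x))). pose proof (Rle_abs (- ip (T x) (A x))).
  rewrite Rabs_Ropp in H3.
  assert (2 * lam * ip (T x) (A x) >= - 2 * Rabs lam * (eps * opnorm T * opnorm A)).
  { destruct (Rle_or_lt 0 lam).
    - rewrite Rabs_right by lra. nra.
    - rewrite Rabs_left by lra. nra. }
  simpl. nra.
Qed.


Lemma ip1_norm u : ip u u = 1 -> hnorm u = 1.
Proof. intro E. unfold hnorm. rewrite E. apply sqrt_1. Qed.

Lemma bil_scal2 B M a x : bil B M -> B (a *v x) (a *v x) = a * a * B x x.
Proof. intros [_ [Bs [Bsym _]]]. rewrite Bs, (Bsym x), Bs. ring. Qed.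

Lemma bil_scalr B M a x y : bil B M -> B x (a *v y) = a * B x y.
Proof. intros [_ [Bs [Bsym _]]]. rewrite (Bsym x), Bs, (Bsym y). ring. Qed.

Lemma K1ext (T : H -> H) (H0 : H -> Prop) x : bounded_linear T -> is_subspace H0 ->
  (forall x, normset T x <-> unit_sphere H0 x) -> H0 x ->
  forall z, ip (T x) (T z) = opnorm T * opnorm T * ip x z.
Proof.
  intros BT HS Hsph Hx z. pose proof BT as [L _].
  destruct (classic (x = 0v)) as [->|Hx0].
  - rewrite (lin_0 _ L), !ip_0l. ring.
  - destruct (normalize _ Hx0) as [Hu [Hxu Hp]]. set (u := (/ hnorm x) *v x) in *.
    assert (Nu : normset T u).
    { apply Hsph. split; [| apply ip1_norm; auto]. apply HS. exact Hx. }
    rewrite Hxu, (lin_scal _ _ _ L), !hinner_scall, (variational _ _ BT Nu). ring.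
Qed.

Lemma isotropic (B : H -> H -> R) M (H0 : H -> Prop) x1 x2 : bil B M -> is_subspace H0 ->
  H0 x1 -> H0 x2 -> 0 < B x1 x1 -> B x2 x2 < 0 ->
  exists w, H0 w /\ ip w w = 1 /\ B w w = 0.
Proof.
  intros HB [P0 [Pa Ps]] H1 H2 Q1 Q2.
  set (b := B x1 x2). set (D := b * b - B x1 x1 * B x2 x2).
  assert (HD : 0 < D) by (unfold D; nra).
  set (s := (- b - sqrt D) / B x2 x2).
  set (w0 := x1 +v s *v x2).
  assert (Hw0 : B w0 w0 = 0).
  { unfold w0. rewrite (bil_expand _ _ _ _ _ HB). fold b. unfold s.
    pose proof (sqrt_sqrt D (Rlt_le _ _ HD)) as Hsq.
    transitivity ((B x1 x1 * B x2 x2 - b*b + sqrt D * sqrt D) / B x2 x2).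
    { field. lra. }
    rewrite Hsq. unfold D. field. lra. }
  assert (Hn0 : w0 <> 0v).
  { intro W. assert (x1 = (- s) *v x2).
    { apply (hadd_cancel (s *v x2)). rewrite hadd_comm. fold w0. rewrite W, <- hscal_addl.
      replace (s + - s) with 0 by ring. symmetry; apply hscal_0l. }
    rewrite H3, (bil_scal2 _ _ _ _ HB) in Q1. nra. }
  destruct (normalize _ Hn0) as [Hu [Hxu Hp]].
  exists ((/ hnorm w0) *v w0). split; [apply Ps; unfold w0; apply Pa; auto|]. split; auto.
  rewrite (bil_scal2 _ _ _ _ HB), Hw0. ring.
Qed.

Definition BAf (T A : H -> H) := fun x y => (ip (T x) (A y) + ip (T y) (A x)) / 2.

Lemma BA_bil (T A : H -> H) : bounded_linear T -> bounded_linear A ->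
  bil (BAf T A) (opnorm T * opnorm A).
Proof.
  intros BT BA. pose proof BT as [LT _]. pose proof BA as [LA _].
  pose proof (bounded_bnd _ BT) as BdT. pose proof (bounded_bnd _ BA) as BdA.
  unfold BAf. split; [|split; [|split]].
  - intros. rewrite (lin_add _ _ _ LT), (lin_add _ _ _ LA), hinner_addl, ip_addr. field.
  - intros. rewrite (lin_scal _ _ _ LT), (lin_scal _ _ _ LA), hinner_scall, ip_scalr. field.
  - intros. field.
  - intros x y. pose proof (cauchy_schwarz (T x) (A y)). pose proof (cauchy_schwarz (T y) (A x)).
    pose proof (opnorm_bound _ x LT BdT). pose proof (opnorm_bound _ y LT BdT).
    pose proof (opnorm_bound _ x LA BdA). pose proof (opnorm_bound _ y LA BdA).
    pose proof (hnorm_pos x). pose proof (hnorm_pos y).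
    pose proof (hnorm_pos (T x)). pose proof (hnorm_pos (T y)).
    pose proof (hnorm_pos (A x)). pose proof (hnorm_pos (A y)).
    pose proof (opnorm_pos _ LT BdT). pose proof (opnorm_pos _ LA BdA).
    assert (hnorm (T x) * hnorm (A y) <= opnorm T * opnorm A * hnorm x * hnorm y).
    { replace (opnorm T * opnorm A * hnorm x * hnorm y) with ((opnorm T * hnorm x) * (opnorm A * hnorm y)) by ring.
      apply Rmult_le_compat; auto. }
    assert (hnorm (T y) * hnorm (A x) <= opnorm T * opnorm A * hnorm x * hnorm y).
    { replace (opnorm T * opnorm A * hnorm x * hnorm y) with ((opnorm T * hnorm y) * (opnorm A * hnorm x)) by ring.
      apply Rmult_le_compat; auto. }
    unfold Rdiv. rewrite Rabs_mult, (Rabs_right (/2)) by lra.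
    pose proof (Rabs_triang (ip (T x) (A y)) (ip (T y) (A x))). lra.
Qed.

Lemma BA_diag (T A : H -> H) x : BAf T A x x = ip (T x) (A x).
Proof. unfold BAf. field. Qed.

Lemma sign_lemma (T A : H -> H) (H0 : H -> Prop) k : bounded_linear T -> bounded_linear A ->
  is_subspace H0 -> (forall x, normset T x <-> unit_sphere H0 x) -> 0 <= k ->
  (forall x, normset T x -> k < Rabs (ip (T x) (A x))) ->
  exists sg, (sg = 1 \/ sg = -1) /\ forall x, normset T x -> k < sg * ip (T x) (A x).
Proof.
  intros BT BA HS Hsph Hk Hall. pose proof (BA_bil _ _ BT BA) as HB.
  assert (Hw : forall x1 x2, normset T x1 -> normset T x2 -> ~ (k < ip (T x1) (A x1) /\ ip (T x2) (A x2) < - k)).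
  { intros x1 x2 N1 N2 [Q1 Q2].
    destruct (isotropic _ _ H0 x1 x2 HB HS) as [w [Hw1 [Hw2 Hw3]]].
    - apply Hsph; auto. - apply Hsph; auto.
    - rewrite BA_diag; lra. - rewrite BA_diag; lra.
    - rewrite BA_diag in Hw3. assert (Nw : normset T w) by (apply Hsph; split; auto; apply ip1_norm; auto).
      pose proof (Hall w Nw). rewrite Hw3, Rabs_R0 in H1. lra. }
  destruct (classic (exists x, normset T x /\ ip (T x) (A x) < - k)) as [[x2 [N2 Q2]]|Hno].
  - exists (-1). split; [right; auto|]. intros x Nx. pose proof (Hall x Nx).
    destruct (Rlt_or_le (ip (T x) (A x)) (- k)); [lra|].
    exfalso. apply (Hw x x2 Nx N2). split; auto.
    destruct (Rle_or_lt 0 (ip (T x) (A x))).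
    + rewrite Rabs_right in H1; lra.
    + rewrite Rabs_left in H1; lra.
  - exists 1. split; [left; auto|]. intros x Nx. pose proof (Hall x Nx).
    destruct (Rle_or_lt 0 (ip (T x) (A x))).
    + rewrite Rabs_right in H1; lra.
    + rewrite Rabs_left in H1 by lra. exfalso. apply Hno. exists x. split; auto. lra.
Qed.


Lemma sg_abs (sg w : R) : (sg = 1 \/ sg = -1) -> - Rabs w <= sg * w.
Proof.
  intros [->| ->]; pose proof (Rle_abs w); pose proof (Rle_abs (- w)); rewrite Rabs_Ropp in *; lra.
Qed.

Lemma prod_bound (p q P Q : R) : 0 <= p -> 0 <= q -> p <= P -> q <= Q -> p * q <= P * Q.
Proof. intros; apply Rmult_le_compat; auto. Qed.

Lemma core (T A : H -> H) (eps : R) (H0 : H -> Prop) (sg : R) :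
  bounded_linear T -> bounded_linear A -> 0 <= eps -> 0 < opnorm T ->
  finite_dim_subspace H0 -> (forall x, normset T x <-> unit_sphere H0 x) ->
  opnorm_on (orth_compl H0) T < opnorm T -> (sg = 1 \/ sg = -1) ->
  (forall x, normset T x -> eps * opnorm T * opnorm A < sg * ip (T x) (A x)) ->
  BJ_orth_eps eps T A -> False.
Proof.
  intros BT BA Heps Ht Hfd Hsph Hgap Hsgv Hall HBJ.
  pose proof BT as [LT _]. pose proof BA as [LA _].
  pose proof (bounded_bnd _ BT) as BdT. pose proof (bounded_bnd _ BA) as BdA.
  set (t := opnorm T) in *. set (NA := opnorm A) in *.
  assert (HNA : 0 <= NA) by (apply opnorm_pos; auto).
  set (k := eps * t * NA) in *.
  assert (Hk : 0 <= k) by (unfold k; apply Rmult_le_pos; [apply Rmult_le_pos|]; lra).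
  pose proof Hfd as [HS _]. pose proof HS as [P0 [Pa Ps]].
  destruct (GS _ Hfd) as [m [e [O [Pe Hsp]]]].
  assert (Hsg2 : sg * sg = 1) by (destruct Hsgv as [-> | ->]; ring).
  pose proof (BA_bil _ _ BT BA) as HBA. fold t NA in HBA.
  set (Bs := fun x y => sg * BAf T A x y - k * ip x y).
  assert (HBs : bil Bs (t * NA + k)).
  { pose proof HBA as [Ba [Bsc [Bsym Bb]]]. unfold Bs. split; [|split; [|split]].
    - intros. rewrite Ba, hinner_addl. ring.
    - intros. rewrite Bsc, hinner_scall. ring.
    - intros. rewrite Bsym, hinner_sym. ring.
    - intros x y. cbv beta. pose proof (Bb x y). pose proof (cauchy_schwarz x y).
      pose proof (hnorm_pos x). pose proof (hnorm_pos y).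
      unfold Rminus. eapply Rle_trans; [apply Rabs_triang|]. rewrite Rabs_Ropp, !Rabs_mult, (Rabs_right k) by lra.
      assert (Hsa : Rabs sg = 1) by (destruct Hsgv as [-> | ->]; unfold Rabs; destruct Rcase_abs; lra).
      rewrite Hsa. assert (k * Rabs (ip x y) <= k * (hnorm x * hnorm y)) by (apply Rmult_le_compat_l; auto).
      nra. }
  assert (Hpos : forall x, sp m e x -> x <> 0v -> 0 < Bs x x).
  { intros x Hx Hx0.
    assert (Hx1 : H0 x) by (unfold sp in Hx; rewrite <- Hx; unfold proj; apply lc_in; auto).
    destruct (normalize _ Hx0) as [Hu [Hxu Hp]]. set (u := (/ hnorm x) *v x) in *.
    assert (Nu : normset T u) by (apply Hsph; split; [apply Ps; auto| apply ip1_norm; auto]).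
    rewrite Hxu, (bil_scal2 _ _ _ _ HBs). unfold Bs at 1. rewrite BA_diag, Hu.
    pose proof (Hall u Nu). fold k in H1. assert (0 < hnorm x * hnorm x) by nra. nra. }
  destruct (coerc m e Bs _ O HBs Hpos) as [d [Hd Hcoer]].
  assert (Hq : forall x, H0 x -> (k + d) * ip x x <= sg * ip (T x) (A x)).
  { intros x Hx. pose proof (Hcoer x (Hsp x Hx)). unfold Bs in H1. rewrite BA_diag in H1. lra. }
  set (s0 := opnorm_on (orth_compl H0) T) in *.
  assert (Q0 : orth_compl H0 0v) by (intros w _; apply ip_0r).
  assert (Qs : forall a y, orth_compl H0 y -> orth_compl H0 (a *v y)).
  { intros a y Hy w Hw. rewrite ip_scalr, Hy; auto. ring. }
  assert (QB : exists C, forall x, orth_compl H0 x -> hnorm x <= 1 -> hnorm (T x) <= C).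
  { destruct BdT as [C HC]. exists C. intros; auto. }
  assert (Hs0 : 0 <= s0).
  { unfold s0. rewrite <- hnorm_0, <- (lin_0 _ LT). apply opnorm_on_ge; auto. rewrite hnorm_0; lra. }
  set (g := t * t - s0 * s0).
  assert (Hg : 0 < g) by (unfold g; nra).
  set (c := k + d). assert (Hc : 0 < c) by (unfold c; lra).
  set (M := t * NA). assert (HM : 0 <= M) by (unfold M; nra).
  set (K := 8 * M * M / g + NA * NA + 1).
  assert (HK : 0 < K).
  { unfold K. assert (0 <= 8 * M * M / g) by (apply Rmult_le_pos; [nra| left; apply Rinv_0_lt_compat; lra]). nra. }
  set (mu := Rmin (g / (4 * c)) (d / K)).
  assert (Hmu : 0 < mu) by (apply Rmin_glb_lt; apply Rdiv_lt_0_compat; lra).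
  assert (Hmu1 : mu * (4 * c) <= g).
  { pose proof (Rmin_l (g / (4 * c)) (d / K)). fold mu in H1.
    apply Rmult_le_compat_r with (r := 4 * c) in H1; [|lra].
    replace (g / (4 * c) * (4 * c)) with g in H1 by (field; lra). exact H1. }
  assert (Hmu2 : mu * K <= d).
  { pose proof (Rmin_r (g / (4 * c)) (d / K)). fold mu in H1.
    apply Rmult_le_compat_r with (r := K) in H1; [|lra].
    replace (d / K * K) with d in H1 by (field; lra). exact H1. }
  set (lam := - sg * mu).
  set (W := t * t - 2 * mu * k - mu * d).
  set (S := fun y => T y +v lam *v A y).
  assert (BS : bounded_linear S) by (apply bounded_linear_comb; auto).
  pose proof (bounded_bnd _ BS) as BdS. pose proof BS as [LS _].
  assert (Hbound : forall y, hnorm y <= 1 -> ip (S y) (S y) <= W).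
  { intros y Hy1.
    assert (Hyy : ip y y <= 1) by (rewrite <- hnorm_sq; pose proof (hnorm_pos y); nra).
    set (x := proj m e y). set (z := hsub y x).
    assert (Hy : y = x +v z) by (symmetry; apply add_sub).
    assert (Hx0 : H0 x) by (unfold x, proj; apply lc_in; auto).
    assert (Hz : orth_compl H0 z).
    { intros w Hw. rewrite <- (Hsp w Hw). rewrite hinner_sym. apply proj_orth_lc; auto. }
    assert (Hxz : ip x z = 0) by (apply Hz; auto).
    assert (Hab : ip x x + ip z z = ip y y).
    { rewrite Hy. rewrite hinner_addl, !ip_addr, (hinner_sym _ z x), Hxz. ring. }
    pose proof (hinner_pos H x) as Ha0. pose proof (hinner_pos H z) as Hb0.
    set (nz := hnorm z). assert (Hnz : nz * nz = ip z z) by apply hnorm_sq.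
    assert (Hnz0 : 0 <= nz) by apply hnorm_pos.
    assert (Hnx : hnorm x <= 1) by (apply norm_le_iff; lra).
    assert (HTy : T y = T x +v T z) by (rewrite Hy at 1; apply lin_add; auto).
    assert (HAy : A y = A x +v A z) by (rewrite Hy at 1; apply lin_add; auto).
    assert (KTxz : ip (T x) (T z) = 0) by (rewrite (K1ext _ _ x BT HS Hsph Hx0), Hxz; ring).
    assert (KTxx : ip (T x) (T x) = t * t * ip x x) by (apply (K1ext _ _ x BT HS Hsph Hx0)).
    assert (HTz : ip (T z) (T z) <= s0 * s0 * ip z z).
    { pose proof (opnorm_on_bound (orth_compl H0) T z LT Q0 Qs QB Hz) as Hb. fold s0 in Hb.
      pose proof (hnorm_pos (T z)). pose proof (sq_le_of_norm _ _ H1 Hb). rewrite hnorm_sq in H2.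
      fold nz in H2. rewrite <- Hnz. nra. }
    assert (HTyy : ip (T y) (T y) = t * t * ip x x + ip (T z) (T z)).
    { rewrite HTy, hinner_addl, !ip_addr, (hinner_sym _ (T z) (T x)), KTxz, KTxx. ring. }
    assert (Hcross : ip (T y) (A y) = ip (T x) (A x) + ip (T x) (A z) + ip (T z) (A y)).
    { rewrite HTy, hinner_addl. rewrite HAy at 1. rewrite ip_addr. ring. }
    assert (B1 : Rabs (ip (T x) (A z)) <= M * nz).
    { eapply Rle_trans; [apply cauchy_schwarz|]. unfold M.
      pose proof (opnorm_bound _ x LT BdT). pose proof (opnorm_bound _ z LA BdA). fold t NA nz in H1, H2.
      replace (t * NA * nz) with (t * (NA * nz)) by ring.
      apply prod_bound; try apply hnorm_pos; auto. pose proof (hnorm_pos x). nra. }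
    assert (B2 : Rabs (ip (T z) (A y)) <= M * nz).
    { eapply Rle_trans; [apply cauchy_schwarz|]. unfold M.
      pose proof (opnorm_bound _ z LT BdT). pose proof (opnorm_bound _ y LA BdA). fold t NA nz in H1, H2.
      replace (t * NA * nz) with ((t * nz) * NA) by ring.
      apply prod_bound; try apply hnorm_pos; auto. pose proof (hnorm_pos y). nra. }
    assert (B3 : ip (A y) (A y) <= NA * NA).
    { pose proof (opnorm_bound _ y LA BdA). fold NA in H1. rewrite <- hnorm_sq.
      pose proof (hnorm_pos (A y)). pose proof (hnorm_pos y). apply sq_le_of_norm; auto. nra. }
    pose proof (Hq x Hx0) as Hqx. fold c in Hqx.
    pose proof (sg_abs _ (ip (T x) (A z)) Hsgv). pose proof (sg_abs _ (ip (T z) (A y)) Hsgv).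
    assert (Hsc : c * ip x x - 2 * M * nz <= sg * ip (T y) (A y)).
    { rewrite Hcross. rewrite !Rmult_plus_distr_l. lra. }
    unfold S. rewrite ip_expand.
    assert (E1 : 2 * lam * ip (T y) (A y) = - 2 * mu * (sg * ip (T y) (A y))) by (unfold lam; ring).
    assert (E2 : lam * lam = mu * mu) by (unfold lam; transitivity (sg * sg * (mu * mu)); [ring| rewrite Hsg2; ring]).
    rewrite E1, E2.
    assert (S1 : - 2 * mu * (sg * ip (T y) (A y)) <= - 2 * mu * (c * ip x x - 2 * M * nz)) by nra.
    assert (S2 : mu * mu * ip (A y) (A y) <= mu * mu * (NA * NA)) by (apply Rmult_le_compat_l; nra).
    set (a := ip x x) in *.
    assert (Ha1 : a <= 1 - nz * nz) by lra.
    assert (S3 : (t * t - 2 * mu * c) * a <= (t * t - 2 * mu * c) * (1 - nz * nz)).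
    { apply Rmult_le_compat_l; auto. assert (g <= t * t) by (unfold g; nra). nra. }
    assert (S4 : 0 <= g / 2 * (nz - 4 * mu * M / g) * (nz - 4 * mu * M / g)).
    { pose proof (Rle_0_sqr (nz - 4 * mu * M / g)). unfold Rsqr in *. nra. }
    assert (S5 : g / 2 * (nz - 4 * mu * M / g) * (nz - 4 * mu * M / g) =
                 g / 2 * nz * nz - 4 * mu * M * nz + 8 * mu * mu * M * M / g) by (field; lra).
    assert (S6 : mu * mu * (8 * M * M / g + NA * NA) <= mu * d).
    { assert (mu * (8 * M * M / g + NA * NA) <= mu * K) by (unfold K; nra). nra. }
    assert (S7 : 8 * mu * mu * M * M / g = mu * mu * (8 * M * M / g)) by (field; lra).
    assert (F : 2 * mu * c * (nz * nz) <= g / 2 * (nz * nz)).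
    { assert (0 <= nz * nz) by nra. apply Rmult_le_compat_r with (r := nz * nz) in Hmu1; auto. lra. }
    unfold W, c in *. unfold g in S5, S4, S6, S7, Hmu1, F.
    rewrite <- Hnz in HTz. rewrite HTyy. lra. }
  assert (HW0 : 0 <= W).
  { pose proof (Hbound 0v ltac:(rewrite hnorm_0; lra)). pose proof (hinner_pos H (S 0v)). lra. }
  assert (HSn : opnorm S <= sqrt W).
  { apply opnorm_le; auto. intros y Hy. unfold hnorm. apply sqrt_le_1_alt. apply Hbound; auto. }
  pose proof (opnorm_pos _ LS BdS) as HS0.
  assert (HSW : opnorm S * opnorm S <= W).
  { pose proof (sqrt_sqrt W HW0). pose proof (sqrt_pos W). nra. }
  pose proof (HBJ lam) as HB. rewrite (opnorm_scal A lam LA BdA) in HB. fold NA t S in HB.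
  assert (Rabs lam = mu) by (unfold lam; destruct Hsgv as [-> | ->]; [rewrite Rabs_left by lra; ring| rewrite Rabs_right by lra; ring]).
  rewrite H1 in HB. simpl in HB. unfold W in HSW. unfold k in *. nra.
Qed.


Lemma hnorm_triang (a b : H) : hnorm (a +v b) <= hnorm a + hnorm b.
Proof.
  apply norm_le_iff. pose proof (hnorm_pos a); pose proof (hnorm_pos b); lra.
  rewrite hinner_addl, !ip_addr, (hinner_sym _ b a).
  pose proof (cauchy_schwarz a b). pose proof (Rle_abs (ip a b)).
  rewrite <- !hnorm_sq. nra.
Qed.

Lemma hsub_tri (a b c : H) : hsub a c = hsub a b +v hsub b c.
Proof.
  unfold hsub. rewrite hadd_assoc. f_equal. rewrite <- hadd_assoc.
  rewrite (hadd_comm _ ((-1) *v b) b), sub_self, hadd_0r. reflexivity.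
Qed.

Lemma hsub_self (a : H) : hsub a a = 0v.
Proof. apply sub_self. Qed.

Lemma hsub_swap (a b : H) : hsub b a = (-1) *v hsub a b.
Proof.
  unfold hsub. rewrite hscal_addr, hscal_assoc. replace (-1 * -1) with 1 by ring.
  rewrite hscal_1, hadd_comm. reflexivity.
Qed.

Lemma hnorm_hsub_swap (a b : H) : hnorm (hsub b a) = hnorm (hsub a b).
Proof. rewrite hsub_swap, hnorm_scal. replace (Rabs (-1)) with 1. ring.
  unfold Rabs; destruct Rcase_abs; lra. Qed.

Lemma hsub_add_scal (u v w : H) (a : R) : hsub (u +v a *v v) w = hsub u w +v a *v v.
Proof.
  unfold hsub. rewrite <- !hadd_assoc. f_equal. apply hadd_comm.
Qed.

Lemma hsub_add (a b c d : H) : hsub (a +v b) (c +v d) = hsub a c +v hsub b d.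
Proof. unfold hsub. rewrite hscal_addr. apply add_swap4. Qed.

Lemma hsub_scal (a : R) (x y : H) : hsub (a *v x) (a *v y) = a *v hsub x y.
Proof. unfold hsub. rewrite hscal_addr, !hscal_assoc. f_equal. f_equal. ring. Qed.

Definition islim (u : nat -> H) (l : H) : Prop :=
  forall r, 0 < r -> exists N, forall n, (N <= n)%nat -> hnorm (hsub (u n) l) < r.

Lemma islim_unique u l1 l2 : islim u l1 -> islim u l2 -> l1 = l2.
Proof.
  intros A B. apply (hadd_cancel ((-1) *v l2)). rewrite !(hadd_comm _ ((-1) *v l2)).
  fold (hsub l1 l2). fold (hsub l2 l2). rewrite hsub_self.
  apply hnorm_eq0. apply Rle_antisym; [|apply hnorm_pos].
  apply Rle_plus_epsilon. intros r Hr.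
  destruct (A (r/2) ltac:(lra)) as [N1 HN1]. destruct (B (r/2) ltac:(lra)) as [N2 HN2].
  pose proof (HN1 (N1 + N2)%nat ltac:(lia)). pose proof (HN2 (N1 + N2)%nat ltac:(lia)).
  rewrite (hsub_tri l1 (u (N1+N2)%nat) l2). eapply Rle_trans; [apply hnorm_triang|].
  rewrite hnorm_hsub_swap. lra.
Qed.

Lemma islim_add u v (l l' : H) : islim u l -> islim v l' -> islim (fun n => u n +v v n) (l +v l').
Proof.
  intros A B r Hr. destruct (A (r/2) ltac:(lra)) as [N1 HN1]. destruct (B (r/2) ltac:(lra)) as [N2 HN2].
  exists (N1 + N2)%nat. intros n Hn. rewrite hsub_add.
  eapply Rle_lt_trans; [apply hnorm_triang|].
  pose proof (HN1 n ltac:(lia)). pose proof (HN2 n ltac:(lia)). lra.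
Qed.

Lemma islim_scal u l a : islim u l -> islim (fun n => a *v u n) (a *v l).
Proof.
  intros A r Hr. destruct (A (r / (Rabs a + 1))) as [N HN].
  { apply Rdiv_lt_0_compat; pose proof (Rabs_pos a); lra. }
  exists N. intros n Hn. rewrite hsub_scal, hnorm_scal.
  pose proof (HN n Hn). pose proof (Rabs_pos a).
  assert (Rabs a * hnorm (hsub (u n) l) <= Rabs a * (r / (Rabs a + 1))).
  { apply Rmult_le_compat_l; lra. }
  assert (Rabs a * (r / (Rabs a + 1)) < r).
  { apply (Rmult_lt_reg_r (Rabs a + 1)); [lra|]. unfold Rdiv.
    replace (Rabs a * (r * / (Rabs a + 1)) * (Rabs a + 1)) with (Rabs a * r) by (field; lra). nra. }
  lra.
Qed.

Lemma islim_ev_const u l N : (forall n, (N <= n)%nat -> u n = l) -> islim u l.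
Proof.
  intros E r Hr. exists N. intros n Hn. rewrite E, hsub_self, hnorm_0; auto.
Qed.

Lemma islim_ip_le u l y L N : islim u l -> (forall n, (N <= n)%nat -> ip y (u n) <= L) -> ip y l <= L.
Proof.
  intros A B. apply Rle_plus_epsilon. intros r Hr.
  destruct (A (r / (hnorm y + 1))) as [N1 HN1].
  { apply Rdiv_lt_0_compat; pose proof (hnorm_pos y); lra. }
  pose proof (HN1 (N + N1)%nat ltac:(lia)) as K. pose proof (B (N + N1)%nat ltac:(lia)) as K2.
  set (w := u (N + N1)%nat) in *.
  pose proof (cauchy_schwarz y (hsub w l)). rewrite ip_subr in H0.
  pose proof (Rle_abs (- (ip y w - ip y l))). rewrite Rabs_Ropp in H1.
  pose proof (hnorm_pos y).
  assert (hnorm y * hnorm (hsub w l) <= hnorm y * (r / (hnorm y + 1))) by (apply Rmult_le_compat_l; lra).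
  assert (hnorm y * (r / (hnorm y + 1)) <= r).
  { apply (Rmult_le_reg_r (hnorm y + 1)); [lra|]. unfold Rdiv.
    replace (hnorm y * (r * / (hnorm y + 1)) * (hnorm y + 1)) with (hnorm y * r) by (field; lra). nra. }
  lra.
Qed.

Lemma islim_norm_le u l y L N : islim u l -> (forall n, (N <= n)%nat -> hnorm (hsub y (u n)) <= L) ->
  hnorm (hsub y l) <= L.
Proof.
  intros A B. apply Rle_plus_epsilon. intros r Hr.
  destruct (A r Hr) as [N1 HN1].
  pose proof (HN1 (N + N1)%nat ltac:(lia)). pose proof (B (N + N1)%nat ltac:(lia)).
  rewrite (hsub_tri y (u (N + N1)%nat) l). eapply Rle_trans; [apply hnorm_triang|]. lra.
Qed.

Lemma complete (u : nat -> H) :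
  (forall r, 0 < r -> exists N, forall n m, (N <= m)%nat -> (m <= n)%nat -> ip (hsub (u n) (u m)) (hsub (u n) (u m)) < r * r) ->
  exists l, islim u l.
Proof.
  intro C. destruct (hcomplete H u) as [l Hl].
  - intros r Hr. destruct (C r Hr) as [N HN]. exists N. intros n m Hn Hm.
    rewrite hopp_scal. fold (hsub (u n) (u m)). fold (hnorm (hsub (u n) (u m))).
    destruct (Compare_dec.le_lt_dec m n) as [l0|l0].
    + pose proof (HN n m Hm l0). unfold hnorm. rewrite <- (sqrt_square r) by lra. apply sqrt_lt_1_alt.
      split; [apply hinner_pos| lra].
    + rewrite <- hnorm_hsub_swap. pose proof (HN m n Hn ltac:(lia)). unfold hnorm.
      rewrite <- (sqrt_square r) by lra. apply sqrt_lt_1_alt. split; [apply hinner_pos| lra].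
  - exists l. intros r Hr. destruct (Hl r Hr) as [N HN]. exists N. intros n Hn.
    pose proof (HN n Hn). rewrite hopp_scal in H0. exact H0.
Qed.


Definition Sp (es : nat -> H) (b : nat -> R) (N : nat) (x : H) : H :=
  lin_comb N es (fun i => b i * ip x (es i)).

Lemma diff_norm es c N N' : ON N' es -> (N <= N')%nat ->
  ip (hsub (lin_comb N' es c) (lin_comb N es c)) (hsub (lin_comb N' es c) (lin_comb N es c))
  = ssum N' (fun i => c i * c i) - ssum N (fun i => c i * c i).
Proof.
  intros O HN. induction N' as [|N' IH].
  - assert (N = 0)%nat by lia. subst. simpl. rewrite hsub_self, ip_0l. ring.
  - destruct (Nat.eq_dec N (S N')) as [->|Hne].
    + rewrite hsub_self, ip_0l. ring.
    + assert (O' : ON N' es) by (apply (ON_le (S N')); auto; lia).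
      specialize (IH O' ltac:(lia)).
      rewrite lc_S, hsub_add_scal, ip_expand, IH. simpl.
      rewrite ip_subl, !ip_lc_orth by (intros; apply (proj2 O); lia).
      rewrite (proj1 O) by lia. ring.
Qed.

Lemma ssum_diff_le f g m n : (m <= n)%nat -> (forall i, f i <= g i) ->
  ssum n f - ssum m f <= ssum n g - ssum m g.
Proof.
  intros Hmn Hfg. induction n as [|n IH].
  - assert (m = 0)%nat by lia. subst. simpl. lra.
  - destruct (Nat.eq_dec m (S n)) as [->|Hne]; [lra|].
    specialize (IH ltac:(lia)). simpl. pose proof (Hfg n). lra.
Qed.

Lemma Sp_cauchy es b x : (forall n, ON n es) -> (forall i, 0 <= b i <= 1) ->
  exists l, islim (fun N => Sp es b N x) l.
Proof.
  intros O Hb. apply complete.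
  set (c := fun i => ip x (es i)).
  set (sig := fun N => ssum N (fun i => c i * c i)).
  assert (Hg : Un_growing sig).
  { intro n. unfold sig. simpl. pose proof (Rle_0_sqr (c n)). unfold Rsqr in H0. lra. }
  assert (Hub : has_ub sig).
  { exists (ip x x). intros r [n ->]. unfold sig, c. apply bessel_le; auto. }
  destruct (growing_cv sig Hg Hub) as [L HL].
  assert (Cc := CV_Cauchy sig (exist _ L HL)).
  intros r Hr. destruct (Cc (r * r) ltac:(nra)) as [N HN]. exists N. intros n m Hm Hmn.
  unfold Sp. rewrite diff_norm by auto.
  pose proof (HN n m ltac:(lia) ltac:(lia)) as K. unfold Rdist, sig in K.
  eapply Rle_lt_trans; [apply (ssum_diff_le _ (fun i => c i * c i)); auto|].
  { intro i. pose proof (Hb i). fold (c i). assert (0 <= c i * c i) by nra.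
    replace (b i * c i * (b i * c i)) with ((b i * b i) * (c i * c i)) by ring.
    assert (b i * b i <= 1) by nra. nra. }
  pose proof (Rle_abs (ssum n (fun i => c i * c i) - ssum m (fun i => c i * c i))). lra.
Qed.

Definition Dop (es : nat -> H) (b : nat -> R) (x : H) : H :=
  epsilon (inhabits 0v) (fun l => islim (fun N => Sp es b N x) l).

Lemma D_spec es b x : (forall n, ON n es) -> (forall i, 0 <= b i <= 1) ->
  islim (fun N => Sp es b N x) (Dop es b x).
Proof. intros O Hb. unfold Dop. apply epsilon_spec. apply Sp_cauchy; auto. Qed.

Lemma D_add es b x y : (forall n, ON n es) -> (forall i, 0 <= b i <= 1) ->
  Dop es b (x +v y) = Dop es b x +v Dop es b y.
Proof.
  intros O Hb. apply (islim_unique (fun N => Sp es b N (x +v y))). apply D_spec; auto.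
  assert (E : (fun N => Sp es b N (x +v y)) = (fun N => Sp es b N x +v Sp es b N y)).
  { apply functional_extensionality. intro N. unfold Sp. rewrite <- lc_add. apply lc_ext.
    intros. rewrite hinner_addl. ring. }
  rewrite E. apply islim_add; apply D_spec; auto.
Qed.

Lemma D_scal es b a x : (forall n, ON n es) -> (forall i, 0 <= b i <= 1) ->
  Dop es b (a *v x) = a *v Dop es b x.
Proof.
  intros O Hb. apply (islim_unique (fun N => Sp es b N (a *v x))). apply D_spec; auto.
  assert (E : (fun N => Sp es b N (a *v x)) = (fun N => a *v Sp es b N x)).
  { apply functional_extensionality. intro N. unfold Sp. rewrite <- lc_scal. apply lc_ext.
    intros. rewrite hinner_scall. ring. }
  rewrite E. apply islim_scal; apply D_spec; auto.
Qed.

Lemma D_contr es b x : (forall n, ON n es) -> (forall i, 0 <= b i <= 1) ->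
  hnorm (hsub x (Dop es b x)) <= hnorm x.
Proof.
  intros O Hb. apply (islim_norm_le _ _ _ _ 0 (D_spec es b x O Hb)). intros N _.
  apply norm_le_iff; [apply hnorm_pos|]. rewrite hnorm_sq.
  unfold Sp. set (c := fun i => ip x (es i)).
  rewrite ip_subl, !ip_subr, ip_lc_lc by auto. rewrite ip_lc_r, ip_lc_l.
  rewrite (ssum_ext N (fun i => b i * ip x (es i) * ip (es i) x) (fun i => b i * c i * c i))
    by (intros; unfold c; rewrite hinner_sym; auto).
  fold c.
  assert (ssum N (fun i => b i * c i * (b i * c i)) <= ssum N (fun i => b i * c i * c i)).
  { apply ssum_le. intros i _. pose proof (Hb i). assert (0 <= c i * c i) by nra.
    replace (b i * c i * (b i * c i)) with (b i * b i * (c i * c i)) by ring.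
    replace (b i * c i * c i) with (b i * (c i * c i)) by ring. apply Rmult_le_compat_r; [auto| nra]. }
  assert (0 <= ssum N (fun i => b i * c i * c i)).
  { apply ssum_nonneg. intros i _. pose proof (Hb i). assert (0 <= c i * c i) by nra.
    replace (b i * c i * c i) with (b i * (c i * c i)) by ring. nra. }
  unfold c in *; cbv beta in *; lra.
Qed.

Lemma lc_delta es b n N : (forall k, ON k es) -> (n < N)%nat ->
  lin_comb N es (fun i => b i * ip (es n) (es i)) = b n *v es n.
Proof.
  intros O. induction N as [|N IH]; intros HN; [lia|].
  rewrite lc_S. destruct (Nat.eq_dec n N) as [->|Hne].
  - rewrite lc_zero. rewrite (proj1 (O (S N))) by lia. rewrite Rmult_1_r. apply hadd_0.
    intros i Hi. rewrite (proj2 (O (S N))) by lia. ring.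
  - rewrite IH by lia. rewrite (proj2 (O (S N))) by lia. rewrite Rmult_0_r, hscal_0l. apply hadd_0r.
Qed.

Lemma D_basis es b n : (forall k, ON k es) -> (forall i, 0 <= b i <= 1) ->
  Dop es b (es n) = b n *v es n.
Proof.
  intros O Hb. apply (islim_unique (fun N => Sp es b N (es n))). apply D_spec; auto.
  apply (islim_ev_const _ _ (S n)). intros N HN. unfold Sp. apply lc_delta; auto.
Qed.

Lemma Sp_ip es b x N : (forall k, ON k es) ->
  ip x (Sp es b N x) = ssum N (fun i => b i * (ip x (es i) * ip x (es i))).
Proof. intros O. unfold Sp. rewrite ip_lc_r. apply ssum_ext. intros; ring. Qed.


Definition H0T (T : H -> H) : H -> Prop :=
  fun x => forall z, ip (T x) (T z) = opnorm T * opnorm T * ip x z.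

Lemma H0T_sub (T : H -> H) : bounded_linear T -> is_subspace (H0T T).
Proof.
  intros [L _]. unfold H0T. split; [|split].
  - intro z. rewrite (lin_0 _ L), !ip_0l. ring.
  - intros x y Hx Hy z. rewrite (lin_add _ _ _ L), !hinner_addl, Hx, Hy. ring.
  - intros a x Hx z. rewrite (lin_scal _ _ _ L), !hinner_scall, Hx. ring.
Qed.

Lemma H0T_sphere (T : H -> H) : bounded_linear T -> forall x, normset T x <-> unit_sphere (H0T T) x.
Proof.
  intros BT x. split.
  - intro Nx. split; [| apply Nx]. intro z. apply variational; auto.
  - intros [Hx Hn]. split; auto.
    pose proof BT as [L _]. pose proof (opnorm_pos _ L (bounded_bnd _ BT)).
    unfold hnorm. rewrite (Hx x). rewrite <- hnorm_sq, Hn, !Rmult_1_r. apply sqrt_square; auto.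
Qed.

Lemma ext_lemma (H0 : H -> Prop) : is_subspace H0 -> ~ finite_dim_subspace H0 ->
  forall n e, ON n e -> (forall i, (i < n)%nat -> H0 (e i)) ->
  exists u, H0 u /\ ip u u = 1 /\ forall i, (i < n)%nat -> ip (e i) u = 0.
Proof.
  intros HS Hnf n e O He. pose proof HS as [P0 [Pa Ps]].
  destruct (classic (forall x, H0 x -> proj n e x = x)) as [Hall|Hex].
  - exfalso. apply Hnf. split; auto. exists n, e. split; auto.
    intros x Hx. exists (fun i => ip x (e i)). symmetry. apply Hall; auto.
  - apply not_all_ex_not in Hex. destruct Hex as [x Hx].
    apply imply_to_and in Hx. destruct Hx as [Hx Hp].
    set (w := hsub x (proj n e x)).
    assert (Hw : w <> 0v).
    { intro W. apply Hp. pose proof (add_sub (proj n e x) x) as Ea. fold w in Ea. rewrite W, hadd_0r in Ea. auto. }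
    destruct (normalize _ Hw) as [Hu [_ _]].
    exists ((/ hnorm w) *v w). split; [|split; auto].
    + apply Ps. unfold w, hsub. apply Pa; auto. apply Ps. unfold proj. apply lc_in; auto.
    + intros i Hi. rewrite ip_scalr, hinner_sym. unfold w. rewrite proj_orth; auto. ring.
Qed.

Fixpoint pre (F : (nat -> H) -> nat -> H) (n : nat) : nat -> H :=
  match n with
  | O => fun _ => 0v
  | S k => fun i => if Nat.ltb i k then pre F k i else F (pre F k) k
  end.

Lemma pre_stable F n i : (i < n)%nat -> pre F n i = F (pre F i) i.
Proof.
  induction n as [|n IH]; intros Hi; [lia|]. simpl.
  destruct (Nat.ltb_spec i n); [apply IH; auto|]. assert (i = n) by lia. subst. auto.
Qed.

Lemma ON_ext n e e' : (forall i, (i < n)%nat -> e i = e' i) -> ON n e -> ON n e'.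
Proof.
  intros E [O1 O2]. split; intros; rewrite <- !E by auto; auto.
Qed.

Lemma seq_lemma (H0 : H -> Prop) : is_subspace H0 -> ~ finite_dim_subspace H0 ->
  exists es, (forall n, ON n es) /\ forall n, H0 (es n).
Proof.
  intros HS Hnf.
  set (Pr := fun (e : nat -> H) (n : nat) (u : H) => H0 u /\ ip u u = 1 /\ forall i, (i < n)%nat -> ip (e i) u = 0).
  set (F := fun e n => epsilon (inhabits 0v) (Pr e n)).
  set (es := fun n => F (pre F n) n).
  assert (Hpre : forall n i, (i < n)%nat -> pre F n i = es i) by (intros; apply pre_stable; auto).
  assert (Main : forall n, ON n es /\ forall i, (i < n)%nat -> H0 (es i)).
  { induction n as [|n [IHo IHh]].
    - split; [split; intros; lia| intros; lia].
    - assert (Op : ON n (pre F n)) by (apply (ON_ext n es); auto; intros; symmetry; auto).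
      assert (Hp : forall i, (i < n)%nat -> H0 (pre F n i)) by (intros; rewrite Hpre; auto).
      assert (Hs : Pr (pre F n) n (es n)).
      { unfold es, F. apply epsilon_spec. apply ext_lemma; auto. }
      destruct Hs as [S1 [S2 S3]].
      split.
      + split.
        * intros i Hi. destruct (Nat.eq_dec i n) as [->|]; auto. apply (proj1 IHo); lia.
        * intros i j Hi Hj Hij. destruct (Nat.eq_dec i n) as [->|Hin], (Nat.eq_dec j n) as [->|Hjn].
          -- lia.
          -- rewrite hinner_sym, <- (Hpre n j) by lia. apply S3; lia.
          -- rewrite <- (Hpre n i) by lia. apply S3; lia.
          -- apply (proj2 IHo); lia.
      + intros i Hi. destruct (Nat.eq_dec i n) as [->|]; auto. apply IHh; lia. }
  exists es. split; [intro n; apply Main|]. intro n. apply (proj2 (Main (S n))). lia.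
Qed.

Lemma ssum_minus n f g : ssum n (fun i => f i - g i) = ssum n f - ssum n g.
Proof. induction n; simpl; [ring| rewrite IHn; ring]. Qed.

Definition bseq (eps : R) (i : nat) : R := (1 - eps) * (INR i / INR (S i)).

Lemma bseq_props eps i : 0 <= eps < 1 ->
  0 <= bseq eps i <= 1 /\ 1 - bseq eps i = eps + (1 - eps) / INR (S i) /\
  bseq eps i = (1 - eps) - (1 - eps) / INR (S i).
Proof.
  intros He. unfold bseq. rewrite S_INR. pose proof (pos_INR i).
  assert (0 <= INR i / (INR i + 1) <= 1).
  { split; [apply Rmult_le_pos; [lra| left; apply Rinv_0_lt_compat; lra]|].
    apply (Rmult_le_reg_r (INR i + 1)); [lra|]. unfold Rdiv. rewrite Rmult_assoc, Rinv_l by lra. lra. }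
  split; [split; nra|]. split; field; lra.
Qed.

Lemma infinite_contra (T : H -> H) (eps : R) : bounded_linear T -> 0 < opnorm T -> 0 <= eps < 1 ->
  (forall A : H -> H, bounded_linear A ->
      (BJ_orth_eps eps T A <->
       exists x, normset T x /\ Rabs (ip (T x) (A x)) <= eps * opnorm T * opnorm A)) ->
  finite_dim_subspace (H0T T).
Proof.
  intros BT Ht He Hyp. apply NNPP. intro Hnf.
  pose proof BT as [LT _]. pose proof (bounded_bnd _ BT) as BdT. set (t := opnorm T) in *.
  destruct (seq_lemma _ (H0T_sub _ BT) Hnf) as [es [O Hes]].
  set (b := bseq eps).
  assert (Hb : forall i, 0 <= b i <= 1) by (intro i; apply (bseq_props eps i He)).
  set (D := Dop es b).
  set (A := fun x => T (hsub x (D x))).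
  assert (LA : linear_op A).
  { split.
    - intros x y. unfold A, D. rewrite D_add, hsub_add by auto. apply lin_add; auto.
    - intros a x. unfold A, D. rewrite D_scal, hsub_scal by auto. apply lin_scal; auto. }
  assert (HAb : forall x, hnorm (A x) <= t * hnorm x).
  { intro x. unfold A. pose proof (opnorm_bound _ (hsub x (D x)) LT BdT). fold t in H0.
    pose proof (D_contr es b x O Hb). fold D in H1. pose proof (opnorm_pos _ LT BdT).
    fold t in H2. eapply Rle_trans; [exact H0|]. apply Rmult_le_compat_l; auto. }
  assert (BA : bounded_linear A) by (split; auto; exists t; auto).
  pose proof (bounded_bnd _ BA) as BdA.
  assert (Nes : forall n, normset T (es n)).
  { intro n. apply (H0T_sphere _ BT). split; auto. apply ip1_norm. apply (proj1 (O (S n))). lia. }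
  assert (HAe : forall n, A (es n) = (1 - b n) *v T (es n)).
  { intro n. unfold A, D. rewrite D_basis by auto. rewrite <- (lin_scal _ _ _ LT). f_equal.
    unfold hsub. rewrite hscal_assoc. rewrite <- (hscal_1 H (es n)) at 1. rewrite <- hscal_addl.
    f_equal. ring. }
  assert (HNA : opnorm A = t).
  { apply Rle_antisym.
    - apply opnorm_le; auto. intros x Hx. pose proof (HAb x). pose proof (opnorm_pos _ LT BdT). fold t in H1. nra.
    - pose proof (opnorm_ge A (es 0%nat) BdA (Req_le _ _ (proj1 (Nes 0%nat)))).
      assert (Hb0 : b 0%nat = 0) by (unfold b, bseq; simpl; unfold Rdiv; ring).
      rewrite HAe, Hb0, Rminus_0_r, hscal_1 in H0.
      rewrite (proj2 (Nes 0%nat)) in H0. auto. }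
  assert (HBJ : BJ_orth_eps eps T A).
  { intro lam. rewrite (opnorm_scal A lam LA BdA), HNA. fold t.
    set (Sl := fun x => T x +v lam *v A x).
    assert (BS : bounded_linear Sl) by (apply bounded_linear_comb; auto).
    pose proof (bounded_bnd _ BS) as BdS. pose proof BS as [LS _].
    set (X := opnorm Sl). pose proof (opnorm_pos _ LS BdS) as HX. fold X in HX.
    assert (Hn : forall n, t * t - 2 * Rabs lam * t * t * (eps + (1 - eps) / INR (S n)) <= X * X).
    { intro n. pose proof (opnorm_ge Sl (es n) BdS (Req_le _ _ (proj1 (Nes n)))) as G. fold X in G.
      unfold Sl in G. cbv beta in G. rewrite HAe, hscal_assoc, <- (hscal_1 H (T (es n))) in G at 1.
      rewrite <- hscal_addl, hnorm_scal, (proj2 (Nes n)) in G. fold t in G.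
      destruct (bseq_props eps n He) as [_ [E1 _]]. fold b in E1. rewrite E1 in G.
      set (be := eps + (1 - eps) / INR (S n)) in *.
      assert (0 <= be).
      { unfold be. assert (0 <= (1 - eps) / INR (S n)); [|lra].
        apply Rmult_le_pos; [lra| left; apply Rinv_0_lt_compat, lt_0_INR; lia]. }
      pose proof (Rabs_pos (1 + lam * be)). pose proof (Rle_abs (1 + lam * be)).
      assert (Rabs (1 + lam * be) * t * (Rabs (1 + lam * be) * t) <= X * X).
      { apply Rmult_le_compat; try lra; apply Rmult_le_pos; lra. }
      assert (Rabs (1 + lam * be) * Rabs (1 + lam * be) = (1 + lam * be) * (1 + lam * be)).
      { rewrite <- Rabs_mult. apply Rabs_pos_eq. pose proof (Rle_0_sqr (1 + lam * be)); unfold Rsqr in *; lra. }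
      assert (- Rabs lam * be <= lam * be).
      { destruct (Rle_or_lt 0 lam); [rewrite Rabs_right by lra; nra| rewrite Rabs_left by lra; nra]. }
      assert (1 - 2 * Rabs lam * be <= (1 + lam * be) * (1 + lam * be)) by nra.
      assert ((1 - 2 * Rabs lam * be) * (t * t) <= (1 + lam * be) * (1 + lam * be) * (t * t)).
      { apply Rmult_le_compat_r; nra. }
      nra. }
    simpl. rewrite !Rmult_1_r.
    apply Rle_ge. apply Rle_plus_epsilon. intros r Hr.
    set (Kc := 2 * Rabs lam * t * t * (1 - eps)).
    assert (HKc : 0 <= Kc) by (unfold Kc; pose proof (Rabs_pos lam); apply Rmult_le_pos; [|lra]; nra).
    destruct (archimed_cor1 (r / (Kc + 1))) as [N [HN HN0]].
    { apply Rdiv_lt_0_compat; lra. }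
    destruct N as [|n]; [lia|]. pose proof (Hn n) as Hnn.
    assert (HK2 : Kc * / INR (S n) <= r).
    { assert (0 < INR (S n)) by (apply lt_0_INR; lia).
      assert (Kc * / INR (S n) <= (Kc + 1) * / INR (S n)).
      { apply Rmult_le_compat_r; [left; apply Rinv_0_lt_compat; auto| lra]. }
      assert (Hlt : (Kc + 1) * / INR (S n) < (Kc + 1) * (r / (Kc + 1))) by (apply Rmult_lt_compat_l; lra).
      replace ((Kc + 1) * (r / (Kc + 1))) with r in Hlt by (field; lra). lra. }
    unfold Kc in HK2. unfold Rdiv in Hnn.
    replace (t * t - 2 * Rabs lam * t * t * (eps + (1 - eps) * / INR (S n))) with
      (t * t - 2 * eps * t * (Rabs lam * t) - 2 * Rabs lam * t * t * (1 - eps) * / INR (S n)) in Hnn by ring.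
    lra. }
  destruct (proj1 (Hyp A BA) HBJ) as [x [Nx Hx]].
  rewrite HNA in Hx. fold t in Hx.
  assert (Hx1 : ip x x = 1) by (apply (normset_ip _ _ Nx)).
  assert (HTA : ip (T x) (A x) = t * t * (1 - ip x (D x))).
  { unfold A. rewrite (variational _ _ BT Nx). fold t. rewrite ip_subr, Hx1. ring. }
  assert (HD : ip x (D x) < 1 - eps).
  { set (c := fun i => ip x (es i)).
    destruct (classic (exists m, c m <> 0)) as [[m Hm]|Hno].
    - assert (Hc2 : 0 < c m * c m) by nra.
      assert (ip x (D x) <= (1 - eps) * (1 - c m * c m / INR (S m))).
      { apply (islim_ip_le _ _ _ _ (S m) (D_spec es b x O Hb)). intros N HN.
        rewrite Sp_ip by auto.
        rewrite (ssum_ext N _ (fun i => (1 - eps) * (c i * c i) - (1 - eps) * (c i * c i / INR (S i)))).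
        2:{ intros i _. destruct (bseq_props eps i He) as [_ [_ E]]. fold b in E. rewrite E. unfold c. field.
            apply not_0_INR. lia. }
        rewrite ssum_minus, !ssum_scal.
        assert (Hbes : ssum N (fun i => c i * c i) <= 1).
        { rewrite <- Hx1. exact (bessel_le N es x (O N)). }
        assert (Hsl : c m * c m / INR (S m) <= ssum N (fun i => c i * c i / INR (S i))).
        { apply (ssum_single_le N (fun i => c i * c i / INR (S i))); [lia|].
          intros i _. apply Rmult_le_pos; [nra| left; apply Rinv_0_lt_compat, lt_0_INR; lia]. }
        assert (0 <= 1 - eps) by lra.
        assert (A1 : (1 - eps) * ssum N (fun i => c i * c i) <= (1 - eps) * 1) by (apply Rmult_le_compat_l; lra).
        assert (A2 : (1 - eps) * (c m * c m / INR (S m)) <= (1 - eps) * ssum N (fun i => c i * c i / INR (S i)))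
          by (apply Rmult_le_compat_l; lra).
        lra. }
      assert (0 < c m * c m / INR (S m)) by (apply Rdiv_lt_0_compat; [lra| apply lt_0_INR; lia]).
      assert (0 < (1 - eps) * (c m * c m / INR (S m))) by (apply Rmult_lt_0_compat; lra). nra.
    - assert (ip x (D x) <= 0).
      { apply (islim_ip_le _ _ _ _ 0 (D_spec es b x O Hb)). intros N _.
        rewrite Sp_ip by auto. rewrite (ssum_ext N _ (fun _ => 0 * 0)).
        - clear. induction N; simpl; lra.
        - intros i _. assert (c i = 0) by (apply NNPP; intro; apply Hno; exists i; auto).
          unfold c in H0. rewrite H0. ring. }
      lra. }
  rewrite HTA in Hx.
  assert (0 < t * t) by nra.
  assert (eps * t * t < t * t * (1 - ip x (D x))) by nra.
  pose proof (Rle_abs (t * t * (1 - ip x (D x)))). nra.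
Qed.


Lemma gap_contra (T : H -> H) (eps : R) : bounded_linear T -> 0 < opnorm T -> 0 <= eps < 1 ->
  (forall A : H -> H, bounded_linear A ->
      (BJ_orth_eps eps T A <->
       exists x, normset T x /\ Rabs (ip (T x) (A x)) <= eps * opnorm T * opnorm A)) ->
  finite_dim_subspace (H0T T) -> opnorm_on (orth_compl (H0T T)) T < opnorm T.
Proof.
  intros BT Ht He Hyp Hfd.
  pose proof BT as [LT _]. pose proof (bounded_bnd _ BT) as BdT. set (t := opnorm T) in *.
  set (s0 := opnorm_on (orth_compl (H0T T)) T).
  destruct (Rlt_or_le s0 t) as [|Hs]; auto. exfalso.
  destruct (GS _ Hfd) as [m [e [O [Pe Hsp]]]].
  set (A := fun x => T (proj m e x)).
  assert (LA : linear_op A).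
  { split; intros; unfold A; [rewrite proj_add; apply lin_add| rewrite proj_scal; apply lin_scal]; auto. }
  assert (HAb : forall x, hnorm (A x) <= t * hnorm x).
  { intro x. unfold A. pose proof (opnorm_bound _ (proj m e x) LT BdT). fold t in H0.
    assert (hnorm (proj m e x) <= hnorm x).
    { apply norm_le_iff; [apply hnorm_pos|]. rewrite hnorm_sq. unfold proj at 1 2.
      rewrite ip_lc_lc by auto. apply bessel_le; auto. }
    pose proof (opnorm_pos _ LT BdT). fold t in H2. eapply Rle_trans; [exact H0|].
    apply Rmult_le_compat_l; auto. }
  assert (BA : bounded_linear A) by (split; auto; exists t; auto).
  pose proof (bounded_bnd _ BA) as BdA.
  assert (HNA : opnorm A <= t).
  { apply opnorm_le; auto. intros x Hx. pose proof (HAb x). nra. }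
  pose proof (opnorm_pos _ LA BdA) as HNA0.
  assert (HBJ : BJ_orth_eps eps T A).
  { intro lam. rewrite (opnorm_scal A lam LA BdA). fold t.
    set (Sl := fun x => T x +v lam *v A x).
    assert (BS : bounded_linear Sl) by (apply bounded_linear_comb; auto).
    pose proof (bounded_bnd _ BS) as BdS. pose proof BS as [LS _].
    assert (HX : t <= opnorm Sl).
    { destruct (Rlt_or_le (opnorm Sl) t) as [Hlt|]; auto. exfalso.
      assert (s0 <= opnorm Sl).
      { apply opnorm_on_le.
        - intros w _. apply ip_0r.
        - destruct BdT as [C HC]. exists C. auto.
        - intros z Hz Hz1. pose proof (opnorm_ge Sl z BdS Hz1) as G. unfold Sl, A in G. cbv beta in G.
          assert (Pz : proj m e z = 0v) by (apply proj_of_orth; intros i Hi; apply Hz, Pe; auto).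
          rewrite Pz, (lin_0 _ LT), hscal_0r, hadd_0r in G. exact G. }
      lra. }
    simpl. rewrite !Rmult_1_r. pose proof (Rabs_pos lam).
    assert (0 <= eps * t * (Rabs lam * opnorm A)).
    { apply Rmult_le_pos; [apply Rmult_le_pos; lra| apply Rmult_le_pos; lra]. }
    nra. }
  destruct (proj1 (Hyp A BA) HBJ) as [x [Nx Hx]]. fold t in Hx.
  assert (Hx0 : H0T T x) by (apply (H0T_sphere _ BT); auto).
  assert (Ax : A x = T x) by (unfold A; rewrite Hsp; auto).
  rewrite Ax in Hx. destruct (normset_ip _ _ Nx) as [_ I2]. fold t in I2. rewrite I2 in Hx.
  rewrite Rabs_right in Hx by nra.
  assert (eps * t * opnorm A <= eps * t * t) by (apply Rmult_le_compat_l; nra).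
  assert (0 < (1 - eps) * (t * t)) by (apply Rmult_lt_0_compat; nra). lra.
Qed.

Lemma dir2 (T : H -> H) (eps : R) (H0 : H -> Prop) : bounded_linear T -> 0 < opnorm T -> 0 <= eps ->
  finite_dim_subspace H0 -> (forall x, normset T x <-> unit_sphere H0 x) ->
  opnorm_on (orth_compl H0) T < opnorm T ->
  forall A : H -> H, bounded_linear A ->
    (BJ_orth_eps eps T A <->
     exists x, normset T x /\ Rabs (ip (T x) (A x)) <= eps * opnorm T * opnorm A).
Proof.
  intros BT Ht He Hfd Hsph Hgap A BA. split.
  - intro HBJ. apply NNPP. intro Hn.
    assert (Hall : forall x, normset T x -> eps * opnorm T * opnorm A < Rabs (ip (T x) (A x))).
    { intros x Nx. apply Rnot_le_lt. intro Hle. apply Hn. exists x. auto. }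
    pose proof BA as [LA _].
    assert (Hk : 0 <= eps * opnorm T * opnorm A).
    { apply Rmult_le_pos; [apply Rmult_le_pos; lra| apply opnorm_pos; auto; apply bounded_bnd; auto]. }
    destruct (sign_lemma T A H0 _ BT BA (proj1 Hfd) Hsph Hk Hall) as [sg [Hsg Hsa]].
    apply (core T A eps H0 sg); auto.
  - intros [x [Nx Hx]]. apply (easy_dir T A eps x); auto.
Qed.

End Basics.

Theorem mainTheorem3 (H : HilbertSpace) (T : H -> H) (eps : R)
  (hT : bounded_linear T) (hT0 : exists x, T x <> hzero H)
  (heps0 : 0 <= eps) (heps1 : eps < 1) :
  ((forall A : H -> H, bounded_linear A ->
      (BJ_orth_eps eps T A <->
       exists x, normset T x /\
         Rabs (hinner H (T x) (A x)) <= eps * opnorm T * opnorm A))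
   <->
   (exists H0 : H -> Prop,
      finite_dim_subspace H0 /\
      (forall x, normset T x <-> unit_sphere H0 x) /\
      opnorm_on (orth_compl H0) T < opnorm T))
  /\
  ((exists H0 : H -> Prop,
      finite_dim_subspace H0 /\
      (forall x, normset T x <-> unit_sphere H0 x) /\
      opnorm_on (orth_compl H0) T < opnorm T) ->
   forall A : H -> H, bounded_linear A ->
     (forall x, normset T x -> normset A x) ->
     (BJ_orth_eps eps T A <->
      exists x, normset T x /\ ip_orth_eps eps (T x) (A x))).
Proof.
  pose proof (opnorm_T_pos H T hT hT0) as Ht.
  split.
  - split.
    + intro Hyp. exists (H0T H T).
      assert (Hfd : finite_dim_subspace (H0T H T)) by (apply infinite_contra with eps; auto).
      split; auto. split; [apply H0T_sphere; auto|].
      apply gap_contra with eps; auto.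
    + intros [H0 [Hfd [Hsph Hgap]]] A BA. apply (dir2 H T eps H0); auto.
  - intros [H0 [Hfd [Hsph Hgap]]] A BA HMA.
    rewrite (dir2 H T eps H0 hT Ht heps0 Hfd Hsph Hgap A BA).
    split; intros [x [Nx Hx]]; exists x; split; auto; unfold ip_orth_eps in *;
      destruct Nx as [N1 N2]; destruct (HMA x (conj N1 N2)) as [_ N3]; rewrite N2, N3 in *; auto.
Qed.
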